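(* (i) $\mathbf A_0^1=\mathbb M_{\tau_1}(a^+b^+)=\mathbb M_\lambda(a^+b^+)$, and this variety is defined by the identities $xtsx\approx xtxsx$ and $(xy)^2\approx(yx)^2$. (ii) $\mathbf A_0^1\vee\mathbb M_\lambda(ata^+)=\mathbb M_\lambda(ata^+b^+)$, and this variety is defined by the identities $xtx\approx xtx^2$, $xtysxy\approx xtysyx$, $xytxsy\approx yxtxsy$ and $xzxtxsx\approx xzxtsx$.
   Context: Words are elements of the free monoid $\mathfrak A^*$ over a countably infinite alphabet. $A_0=\langle e,f\mid e^2=e,\ f^2=f,\ fe=0\rangle=\{e,f,ef,0\}$, $A_0^1$ is $A_0$ with an identity adjoined, $\mathbf A_0^1$ the monoid variety it generates. Let $\tau_1$ be the congruence on $\mathfrak A^*$ generated by $a=aa$ for all letters $a$; $\mathbf u\,\lambda\,\mathbf v$ iff $\mathbf u\,\tau_1\,\mathbf v$, $\mathbf u,\mathbf v$ have the same set of letters occurring at least twice, and for each such letter its first two occurrences are adjacent in $\mathbf u$ iff adjacent in $\mathbf v$. For $\tau\in\{\tau_1,\lambda\}$, classes are ordered by $\mathtt v\le\mathtt u$ iff $\mathtt u=\mathtt p\mathtt v\mathtt s$ in $\mathfrak A^*/\tau$; for a set $\mathtt W$ of classes, $M_\tau(\mathtt W)$ is the Rees quotient of $\mathfrak A^*/\tau$ by the ideal of classes not $\le$ any element of $\mathtt W$, and $\mathbb M_\tau(\mathtt W)$ the monoid variety it generates. Notation: $\mathbb M_{\tau_1}(a^+b^+)$ uses the $\tau_1$-class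 $\{a^kb^m:k,m\ge1\}$; $\mathbb M_\lambda(a^+b^+)$ uses the $\lambda$-class $\{a^kb^m:k,m\ge2\}$; $ata^+$ is the $\lambda$-class $\{ata^k:k\ge1\}$; $ata^+b^+$ is the $\lambda$-class $\{ata^kb^m:k\ge1,m\ge2\}$. $\vee$ is the join of varieties. *)

(* Defs.v *)
From mathcomp Require Import all_boot.
Set Implicit Arguments. Unset Strict Implicit. Unset Printing Implicit Defensive.

(** Words: elements of the free monoid over the countably infinite alphabet nat. *)
Definition word := seq nat.
Definition identity := (word * word)%type.

(** A monoid presented as a setoid: carrier, equality (an equivalence),
    multiplication and identity.  Quotient monoids (Rees quotients of
    quotients of the free monoid) are represented this way. *)
Record mstruct := MStruct {
  car : Type;
  meq : car -> car -> Prop;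
  mop : car -> car -> car;
  mone : car }.

Definition is_monoid (N : mstruct) : Prop :=
  (forall x : car N, meq x x) /\
  (forall x y : car N, meq x y -> meq y x) /\
  (forall x y z : car N, meq x y -> meq y z -> meq x z) /\
  (forall x x' y y' : car N, meq x x' -> meq y y' -> meq (mop x y) (mop x' y')) /\
  (forall x y z : car N, meq (mop x (mop y z)) (mop (mop x y) z)) /\
  (forall x, meq (mop (mone N) x) x /\ meq (mop x (mone N)) x).

Definition eval (N : mstruct) (phi : nat -> car N) (w : word) : car N :=
  foldr (fun a acc => mop (phi a) acc) (mone N) w.

Definition sat (N : mstruct) (id : identity) : Prop :=
  forall phi : nat -> car N, meq (eval phi id.1) (eval phi id.2).

Definition in_var (M N : mstruct) : Prop :=
  forall id, sat M id -> sat N id.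

Definition var_defined_by (M : mstruct) (Sigma : seq identity) : Prop :=
  forall N, is_monoid N -> (in_var M N <-> (forall id, id \in Sigma -> sat N id)).

Definition same_var (M1 M2 : mstruct) : Prop :=
  forall id, sat M1 id <-> sat M2 id.

(** var M = var M1 \/ var M2 (join): Id(M) = Id(M1) \cap Id(M2). *)
Definition var_is_join (M M1 M2 : mstruct) : Prop :=
  forall id, sat M id <-> (sat M1 id /\ sat M2 id).

Inductive A01 := A1 | Ae | Af | Aef | A0.

Definition A01_mul (x y : A01) : A01 :=
  match x, y with
  | A1, _ => y
  | _, A1 => x
  | A0, _ => A0
  | _, A0 => A0
  | Ae, Ae => Ae
  | Ae, Af => Aef
  | Ae, Aef => Aef
  | Af, Ae => A0
  | Af, Af => Af
  | Af, Aef => A0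
  | Aef, Ae => A0
  | Aef, Af => Aef
  | Aef, Aef => A0
  end.

Definition A01M : mstruct := @MStruct A01 (@eq A01) A01_mul A1.

Inductive tau1 : word -> word -> Prop :=
  | tau1_refl u : tau1 u u
  | tau1_sym u v : tau1 u v -> tau1 v u
  | tau1_trans u v w : tau1 u v -> tau1 v w -> tau1 u w
  | tau1_step (p s : word) (a : nat) : tau1 (p ++ a :: s) (p ++ a :: a :: s).

(** the first two occurrences of the letter a in w are adjacent *)
Definition first2_adj (a : nat) (w : word) : bool :=
  nth a.+1 w (index a w).+1 == a.

Definition lam (u v : word) : Prop :=
  tau1 u v /\
  forall a : nat,
    (1 < count_mem a u <-> 1 < count_mem a v) /\
    (1 < count_mem a u -> (first2_adj a u <-> first2_adj a v)).

(** the tau-class of w is <= some class in W (W given as a set of words that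
    is a union of tau-classes) *)
Definition nonzero (tau : word -> word -> Prop) (W : word -> Prop) (w : word) :=
  exists u p s, W u /\ tau (p ++ w ++ s) u.

Definition Mtau (tau : word -> word -> Prop) (W : word -> Prop) : mstruct :=
  @MStruct word
    (fun x y => (~ nonzero tau W x /\ ~ nonzero tau W y)
                \/ (nonzero tau W x /\ nonzero tau W y /\ tau x y))
    cat [::].

Definition la := 0.
Definition lb := 1.
Definition lt := 2.

Definition W_apbp_tau1 (w : word) : Prop :=
  exists k m, 1 <= k /\ 1 <= m /\ w = nseq k la ++ nseq m lb.
Definition W_apbp_lam (w : word) : Prop :=
  exists k m, 2 <= k /\ 2 <= m /\ w = nseq k la ++ nseq m lb.
Definition W_ata (w : word) : Prop :=
  exists k, 1 <= k /\ w = [:: la; lt] ++ nseq k la.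
Definition W_atab (w : word) : Prop :=
  exists k m, 1 <= k /\ 2 <= m /\ w = [:: la; lt] ++ nseq k la ++ nseq m lb.

Definition vx := 0.
Definition vy := 1.
Definition vt := 2.
Definition vs := 3.
Definition vz := 4.

Definition Sigma1 : seq identity :=
  [:: ([:: vx; vt; vs; vx], [:: vx; vt; vx; vs; vx]);
      ([:: vx; vy; vx; vy], [:: vy; vx; vy; vx])].

Definition Sigma2 : seq identity :=
  [:: ([:: vx; vt; vx], [:: vx; vt; vx; vx]);
      ([:: vx; vt; vy; vs; vx; vy], [:: vx; vt; vy; vs; vy; vx]);
      ([:: vx; vy; vt; vx; vs; vy], [:: vy; vx; vt; vx; vs; vy]);
      ([:: vx; vz; vx; vt; vx; vs; vx], [:: vx; vz; vx; vt; vs; vx])].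

(* Main.v *)
Require Import Defs.
From mathcomp Require Import all_boot zify.
Set Implicit Arguments. Unset Strict Implicit. Unset Printing Implicit Defensive.

Definition cnt (x : nat) (s : seq nat) : nat := count_mem x s.
Ltac cnorm := repeat match goal with
 | H : context [@count ?A (@PredOfSimpl.coerce ?B (@pred1 ?X ?x)) ?s] |- _ =>
     change (@count A (@PredOfSimpl.coerce B (@pred1 X x)) s) with (cnt x s) in H
 | |- context [@count ?A (@PredOfSimpl.coerce ?B (@pred1 ?X ?x)) ?s] =>
     change (@count A (@PredOfSimpl.coerce B (@pred1 X x)) s) with (cnt x s)
 end.

Ltac clia := cnorm; lia.

Lemma cat_eq_cases (p1 s1 p2 s2 : word) : p1 ++ s1 = p2 ++ s2 ->
  (exists m, p2 = p1 ++ m) \/ (exists m, p1 = p2 ++ m).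
Proof.
elim: p1 p2 => [|a p1 IH] [|b p2] /=.
- by move=> _; left; exists [::].
- by move=> _; left; exists (b :: p2).
- by move=> _; right; exists (a :: p1).
- case=> -> /IH [[m ->]|[m ->]]; [left|right]; by exists m.
Qed.

Lemma first_split (x : nat) (s : word) : x \in s ->
  exists s1 s2, s = s1 ++ x :: s2 /\ x \notin s1.
Proof.
elim: s => [|a s IH] //; rewrite inE; case: (eqVneq x a) => [-> _|Hne /= Hs].
  by exists [::], s.
case: (IH Hs) => s1 [s2 [-> H1]]; exists (a :: s1), s2; split => //.
by rewrite inE negb_or Hne H1.
Qed.

Lemma mem_split (x : nat) (s : word) : x \in s -> exists s1 s2, s = s1 ++ x :: s2.
Proof. by case/first_split => s1 [s2 [-> _]]; exists s1, s2. Qed.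

Lemma cnt_gt0 (x : nat) (s : word) : (0 < count_mem x s) = (x \in s).
Proof. by rewrite -has_count has_pred1. Qed.

Fixpoint red (w : word) : word :=
  if w is a :: w' then (if ohead (red w') == Some a then red w' else a :: red w') else [::].

Lemma ohead_red a s : ohead (red (a :: s)) = Some a.
Proof. by rewrite /=; case: eqP. Qed.

Lemma red_step p a s : red (p ++ a :: s) = red (p ++ a :: a :: s).
Proof.
elim: p => [|b p IH] /=; last by rewrite IH.
by rewrite ohead_red eqxx.
Qed.

Lemma tau1_red u v : tau1 u v -> red u = red v.
Proof.
elim=> [w|w1 w2 _ IH|w1 w2 w3 _ IH1 _ IH2|p s a] //; [by rewrite IH1 | exact: red_step].
Qed.

Lemma tau1_cons c u v : tau1 u v -> tau1 (c :: u) (c :: v).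
Proof.
elim=> [w|w1 w2 _ H|w1 w2 w3 _ H1 _ H2|p s a].
- exact: tau1_refl.
- exact: tau1_sym.
- exact: tau1_trans H2.
- exact: (@tau1_step (c :: p) s a).
Qed.

Lemma tau1_to_red u : tau1 u (red u).
Proof.
elim: u => [|a w IH] /=; first exact: tau1_refl.
apply: tau1_trans (tau1_cons a IH) _.
case: eqP => [H|_]; last exact: tau1_refl.
case E: (red w) H => [|b r] //= [<-].
exact: tau1_sym (@tau1_step [::] r b).
Qed.

Lemma red_tau1 u v : red u = red v -> tau1 u v.
Proof.
move=> H; apply: tau1_trans (tau1_to_red u) _; rewrite H.
exact: tau1_sym (tau1_to_red v).
Qed.

Lemma tau1_rcat u v s : tau1 u v -> tau1 (u ++ s) (v ++ s).
Proof.
elim=> [w|w1 w2 _ H|w1 w2 w3 _ H1 _ H2|p s' a].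
- exact: tau1_refl.
- exact: tau1_sym.
- exact: tau1_trans H2.
- rewrite -!catA /=; exact: tau1_step.
Qed.

Lemma tau1_cat p u v s : tau1 u v -> tau1 (p ++ u ++ s) (p ++ v ++ s).
Proof. move=> H; elim: p => [|c p IH] /=; [exact: tau1_rcat | exact: tau1_cons]. Qed.

Lemma tau1_mem x u v : tau1 u v -> (x \in u) = (x \in v).
Proof.
elim=> [w|w1 w2 _ IH|w1 w2 w3 _ IH1 _ IH2|p s a] //; first by rewrite IH1.
by rewrite !mem_cat !inE; case: (x == a).
Qed.

Lemma tau1_head d u v : tau1 u v -> head d u = head d v.
Proof.
elim=> [w|w1 w2 _ IH|w1 w2 w3 _ IH1 _ IH2|p s a] //; first by rewrite IH1.
by case: p.
Qed.

Lemma tau1_last d u v : tau1 u v -> last d u = last d v.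
Proof.
elim=> [w|w1 w2 _ IH|w1 w2 w3 _ IH1 _ IH2|p s a] //; first by rewrite IH1.
by rewrite !last_cat.
Qed.

Definition lamb (u v : word) : bool :=
  (red u == red v) &&
  all (fun a => ((1 < count_mem a u) == (1 < count_mem a v)) &&
                ((1 < count_mem a u) ==> (first2_adj a u == first2_adj a v))) (u ++ v).

Lemma lamP u v : reflect (lam u v) (lamb u v).
Proof.
apply: (iffP andP) => [[/eqP Hr /allP Ha]|[Ht Hc]].
  split; first exact: red_tau1.
  move=> a; case: (boolP (a \in u ++ v)) => [/Ha /andP [/eqP E1 /implyP E2]|].
    by rewrite E1; split => // H; rewrite (eqP (E2 _)) // E1.
  rewrite mem_cat negb_or => /andP [/count_memPn -> /count_memPn ->]; by [].
split; first by apply/eqP; apply: tau1_red.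
apply/allP => a _; case: (Hc a) => E1 E2; apply/andP; split.
  by case: E1 => X Y; apply/eqP; apply/idP/idP.
apply/implyP => H; case: (E2 H) => X Y; apply/eqP; by apply/idP/idP.
Qed.

Lemma lam_refl u : lam u u.
Proof. split; first exact: tau1_refl. by move=> a. Qed.

Lemma lam_sym u v : lam u v -> lam v u.
Proof.
case=> Ht Hc; split; first exact: tau1_sym.
move=> a; case: (Hc a) => E1 E2; split; first tauto.
move=> H; have H' : 1 < count_mem a u by tauto.
by case: (E2 H'); tauto.
Qed.

Lemma lam_trans u v w : lam u v -> lam v w -> lam u w.
Proof.
case=> Ht Hc [Ht' Hc']; split; first exact: tau1_trans Ht'.
move=> a; case: (Hc a) (Hc' a) => E1 E2 [E1' E2']; split; first tauto.
move=> H; have H2 : 1 < count_mem a v by tauto.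
by case: (E2 H); case: (E2' H2); tauto.
Qed.

Lemma f2_cons_neq a c u : c != a -> first2_adj a (c :: u) = first2_adj a u.
Proof. by move=> H; rewrite /first2_adj /= (negbTE H). Qed.

Lemma f2_cons_eq a u : first2_adj a (a :: u) = (head a.+1 u == a).
Proof. by rewrite /first2_adj /= eqxx; case: u. Qed.

Lemma f2_split a p s : a \notin p -> first2_adj a (p ++ a :: s) = (head a.+1 s == a).
Proof.
elim: p => [|c p IH] /=; first by move=> _; rewrite f2_cons_eq.
rewrite inE negb_or => /andP [H1 H2]; rewrite f2_cons_neq ?IH // eq_sym //.
Qed.

Lemma lam_cons c u v : lam u v -> lam (c :: u) (c :: v).
Proof.
case=> Ht Hc; split; first exact: tau1_cons.
move=> a; case: (Hc a) => E1 E2; rewrite /= !(eq_sym c).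
case: (eqVneq a c) => [<-|Hne] /=.
  rewrite !add1n !ltnS !cnt_gt0 (tau1_mem a Ht); split => // _.
  by rewrite !f2_cons_eq (tau1_head _ Ht).
rewrite !add0n; split => // H; rewrite !f2_cons_neq 1?eq_sym //; exact: E2.
Qed.

Lemma f2_rcons a u c : 1 < count_mem a u -> first2_adj a (rcons u c) = first2_adj a u.
Proof.
move=> H; have: a \in u by rewrite -cnt_gt0; apply: ltnW.
case/first_split=> p [s [E Hp]]; subst u.
rewrite rcons_cat /= !f2_split //.
move: H; rewrite count_cat (count_memPn Hp) /= eqxx.
by case: s.
Qed.

Lemma f2_rcons1 a u : count_mem a u = 1 -> first2_adj a (rcons u a) = (last a.+1 u == a).
Proof.
move=> H; have: a \in u by rewrite -cnt_gt0 H.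
case/first_split=> p [s [E Hp]]; subst u.
rewrite rcons_cat /= !f2_split // last_cat /=.
move: H; rewrite count_cat (count_memPn Hp) /= eqxx add0n add1n => -[/count_memPn Hs].
case: s Hs => [|x s] //= Hs.
have Hx : x != a by apply: contraNneq Hs => ->; rewrite mem_head.
rewrite (negbTE Hx); apply/esym/negbTE; apply: contraNneq Hs => <-; exact: mem_last.
Qed.

Lemma lam_rcons c u v : lam u v -> lam (rcons u c) (rcons v c).
Proof.
case=> Ht Hc; split; first by rewrite -!cats1; apply: tau1_rcat.
move=> a; case: (Hc a) => E1 E2; rewrite -!cats1 !count_cat /= !addn0 !cats1.
case: (eqVneq c a) => [->|Hne] /=.
  rewrite !addn1 !ltnS !cnt_gt0 (tau1_mem a Ht); split => // H.
  case: (boolP (1 < count_mem a u)) => H2.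
    have H3 : 1 < count_mem a v by tauto.
    by rewrite !f2_rcons //; apply: E2.
  have Hu : count_mem a u = 1.
    by apply/eqP; rewrite eqn_leq leqNgt H2 cnt_gt0 (tau1_mem a Ht).
  have Hv : count_mem a v = 1.
    have H4 : ~~ (1 < count_mem a v) by apply/negP => H5; move/negP: H2; tauto.
    apply/eqP; rewrite eqn_leq leqNgt H4 cnt_gt0 -(tau1_mem a Ht).
    by rewrite -cnt_gt0 Hu.
  by rewrite !f2_rcons1 // (tau1_last _ Ht).
rewrite !addn0; split => // H.
have H3 : 1 < count_mem a v by tauto.
by rewrite !f2_rcons //; apply: E2.
Qed.

Lemma lam_cat p u v s : lam u v -> lam (p ++ u ++ s) (p ++ v ++ s).
Proof.
move=> H; elim: p => [|c p IH] /=; last exact: lam_cons.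
elim/last_ind: s => [|s c IH]; first by rewrite !cats0.
by rewrite -!rcons_cat; apply: lam_rcons.
Qed.

Definition evb (w : word) (c k d j : nat) : Prop :=
  exists p s, w = p ++ s /\ k < count_mem c p /\ count_mem d p <= j.

Lemma evb_lift (a : nat) (w : word) (c k d j : nat) : evb w c k d j ->
  evb (a :: w) c (k + (a == c)) d (j + (a == d)).
Proof.
case=> p [s [-> [H1 H2]]]; exists (a :: p), s; split => //=.
by split; rewrite addnC; [rewrite ltn_add2l | rewrite leq_add2r].
Qed.

Lemma evb_total (w : word) (c k d j : nat) : c != d -> k < count_mem c w -> j < count_mem d w ->
  evb w c k d j \/ evb w d j c k.
Proof.
move=> Hcd; elim: w k j => [|a w IH] k j //=.
case: (eqVneq a c) => [Hac|Hac].
  subst a; rewrite ?(negbTE Hcd) /= => Hk Hj.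
  case: k Hk => [|k] Hk.
    left; exists [:: c], w; split => //=; rewrite eqxx (negbTE Hcd); by [].
  case: (IH k j _ Hj) => // H; [left|right];
    move: (evb_lift c H); by rewrite eqxx (negbTE Hcd) ?addn0 ?addn1.
case: (eqVneq a d) => [Had|Had].
  subst a; rewrite ?(negbTE Hac) /= => Hk Hj.
  case: j Hj => [|j] Hj.
    right; exists [:: d], w; split => //=; rewrite eqxx (negbTE Hac); by [].
  case: (IH k j Hk _) => // H; [left|right];
    move: (evb_lift d H); by rewrite eqxx (negbTE Hac) ?addn0 ?addn1.
rewrite /= => Hk Hj.
case: (IH k j Hk Hj) => H; [left|right];
  move: (evb_lift a H); by rewrite (negbTE Hac) (negbTE Had) !addn0.
Qed.

Lemma count_cat_le x (p m : word) : count_mem x p <= count_mem x (p ++ m).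
Proof. by rewrite count_cat leq_addr. Qed.

Lemma evb_anti (w : word) (c k d j : nat) : evb w c k d j -> evb w d j c k -> False.
Proof.
case=> p1 [s1 [E1 [H1 H2]]] [p2 [s2 [E2 [H3 H4]]]].
rewrite E1 in E2; case: (cat_eq_cases E2) => [[m Em]|[m Em]]; subst.
  by move: (count_cat_le c p1 m) => X; (cnorm; lia).
by move: (count_cat_le d p2 m) => X; (cnorm; lia).
Qed.

Lemma cat_cancel_l (P a b : word) : P ++ a = P ++ b -> a = b.
Proof. by elim: P => [|x P IH] //= [] /IH. Qed.

Definition sw (W W' : word) : Prop :=
  exists (P : word) (x y : nat) (Q : word), W = P ++ x :: y :: Q /\ W' = P ++ y :: x :: Q /\ x != y /\
    ((x \in P /\ y \in P) \/ (x \in Q /\ y \in Q)).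

Inductive swstar : word -> word -> Prop :=
  | ss_refl w : swstar w w
  | ss_step u v w : sw u v -> swstar v w -> swstar u w.

Lemma swstar_trans u v w : swstar u v -> swstar v w -> swstar u w.
Proof. elim=> // a b c H _ IH /IH; exact: ss_step. Qed.

Lemma sw_count (W W' : word) (e : nat) : sw W W' -> count_mem e W = count_mem e W'.
Proof.
case=> P [x [y [Q [-> [-> _]]]]]; rewrite !count_cat /=; (cnorm; lia).
Qed.

Lemma swstar_count (W W' : word) (e : nat) : swstar W W' -> count_mem e W = count_mem e W'.
Proof. by elim=> // a b c H _ <-; apply: sw_count. Qed.

Definition indep (W : word) (c k d j : nat) : bool :=
  (c != d) && ((0 < k) && (0 < j) || (k.+1 < count_mem c W) && (j.+1 < count_mem d W)).

Lemma indep_cnt (W W' : word) (c k d j : nat) : (forall e : nat, count_mem e W = count_mem e W') ->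
  indep W c k d j = indep W' c k d j.
Proof. by move=> H; rewrite /indep !H. Qed.

Lemma indep_sym (W : word) (c k d j : nat) : indep W c k d j = indep W d j c k.
Proof. by rewrite /indep eq_sym (andbC (0 < k)) (andbC (k.+1 < _)). Qed.

Lemma evb_sw (P : word) (x y : nat) (Q : word) (c k d j : nat) : x != y ->
  evb (P ++ x :: y :: Q) c k d j ->
  ~ (c = x /\ k = count_mem x P /\ d = y /\ j = count_mem y P) ->
  evb (P ++ y :: x :: Q) c k d j.
Proof.
move=> Hxy [p [s [E [H1 H2]]]] Hex.
case: (cat_eq_cases E) => [[m Em]|[m Em]]; last first.
  subst P; exists p, (m ++ y :: x :: Q); split => //; by rewrite catA.
subst p; rewrite -catA in E; move/esym/cat_cancel_l: E.
case: m H1 H2 => [|x' [|y' m]] H1 H2 /=.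
- by move=> _; exists P, (y :: x :: Q); rewrite cats0 in H1 H2 *.
- case=> Ex Es; subst x'.
  move: H1 H2; rewrite !count_cat /= !addn0 => H1 H2.
  case: (ltnP k (count_mem c P)) => Hk.
    exists P, (y :: x :: Q); split => //; split => //.
    by apply: leq_trans H2; apply: leq_addr.
  have Ec : c = x.
    by case: (eqVneq x c) H1 => [->//|_] /=; rewrite addn0 => H; move: (leq_trans H Hk); rewrite ltnn.
  subst c; rewrite eqxx /= in H1.
  have Ek : k = count_mem x P by (cnorm; lia).
  case: (eqVneq d y) => [Ed|Edy].
    subst d; rewrite (negbTE Hxy) addn0 in H2.
    have Ej : count_mem y P < j.
      rewrite ltn_neqAle H2 andbT; apply/eqP => Ej; apply: Hex; by [].
    exists (P ++ [:: y; x]), Q; rewrite -catA; split => //.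
    rewrite !count_cat /= eqxx eq_sym (negbTE Hxy); (cnorm; lia).
  exists (P ++ [:: y; x]), Q; rewrite -catA; split => //.
  rewrite !count_cat /= eqxx eq_sym (negbTE Hxy) (eq_sym y d) (negbTE Edy); (cnorm; lia).
- case=> Ex Ey Es; subst x' y' Q.
  exists (P ++ y :: x :: m), s; rewrite -catA; split => //.
  move: H1 H2; rewrite !count_cat /=; (cnorm; lia).
Qed.

Lemma sw_indep (P : word) (x y : nat) (Q : word) : x != y -> ((x \in P /\ y \in P) \/ (x \in Q /\ y \in Q)) ->
  indep (P ++ x :: y :: Q) x (count_mem x P) y (count_mem y P).
Proof.
move=> Hxy H; rewrite /indep Hxy /=.
case: H => [[H1 H2]|[H1 H2]]; first by rewrite !cnt_gt0 H1 H2.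
have Hyx : (y == x) = false by rewrite eq_sym (negbTE Hxy).
apply/orP; right; rewrite !count_cat /= !eqxx ?(negbTE Hxy) ?Hyx /=.
move: H1 H2; rewrite -!cnt_gt0 => H1 H2; apply/andP; split; (cnorm; lia).
Qed.

Lemma evb_sw_inv (W W' : word) (c k d j : nat) : sw W W' -> ~~ indep W c k d j ->
  (evb W c k d j <-> evb W' c k d j).
Proof.
case=> P [x [y [Q [E1 [E2 [Hxy Hm]]]]]] Hi; subst.
have Hind := sw_indep Hxy Hm.
split => H.
  apply: evb_sw => // [[? [? [? ?]]]]; subst; by rewrite Hind in Hi.
apply: evb_sw H _; first by rewrite eq_sym.
move=> [? [? [? ?]]]; subst.
have Hm' : (y \in P /\ x \in P) \/ (y \in Q /\ x \in Q) by case: Hm => -[]; auto.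
have Hyx : y != x by rewrite eq_sym.
move: Hi; rewrite (@indep_cnt _ (P ++ y :: x :: Q)); last by move=> e; rewrite !count_cat /=; (cnorm; lia).
by rewrite (sw_indep Hyx Hm').
Qed.

Lemma swstar_evb (W W' : word) (c k d j : nat) : swstar W W' -> ~~ indep W c k d j ->
  (evb W c k d j <-> evb W' c k d j).
Proof.
elim=> [w|u v w Hs _ IH] // Hi.
rewrite (evb_sw_inv Hs Hi); apply: IH.
by rewrite -(@indep_cnt u) // => e; apply: sw_count.
Qed.

Definition ordsame (W1 W2 : word) : Prop :=
  forall c k d j : nat, c != d -> k < count_mem c W1 -> j < count_mem d W1 ->
    ~~ indep W1 c k d j -> (evb W1 c k d j <-> evb W2 c k d j).

Lemma bubble (pre : word) (d : nat) (p q : word) : d \notin p ->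
  (forall (p1 : word) (c : nat) (p2 : word), p = p1 ++ c :: p2 ->
     indep (pre ++ p ++ d :: q) c (count_mem c (pre ++ p1)) d (count_mem d pre)) ->
  swstar (pre ++ p ++ d :: q) (pre ++ d :: p ++ q).
Proof.
elim/last_ind: p q => [|p c IH] q Hd H; first exact: ss_refl.
have Hcd : c != d.
  by apply: contraNneq Hd => <-; rewrite mem_rcons mem_head.
have Hdp : d \notin p by apply: contra Hd; rewrite mem_rcons inE => ->; rewrite orbT.
have Hi := H p c [::] (esym (cats1 p c)).
apply: (@ss_step _ (pre ++ p ++ d :: c :: q)).
  exists (pre ++ p), c, d, q; rewrite -!catA -cats1 -catA /=; split => //; split => //.
  split => //; move: Hi; rewrite /indep Hcd /= => /orP [/andP [H1 H2]|/andP [H1 H2]].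
    by left; move: H1 H2; rewrite -!cnt_gt0 !count_cat => H1 H2; split; (cnorm; lia).
  right; rewrite -!cnt_gt0; move: H1 H2.
  rewrite -cats1 !count_cat /= !eqxx ?(eq_sym d c) ?(negbTE Hcd) ?(count_memPn Hdp) /=.
  by move=> H1 H2; split; (cnorm; lia).
have -> : pre ++ d :: rcons p c ++ q = pre ++ d :: p ++ c :: q by rewrite -cats1 -catA.
apply: IH => // p1 c' p2 Ep.
rewrite (@indep_cnt _ (pre ++ rcons p c ++ d :: q)); last first.
  by move=> e; rewrite -cats1 !count_cat /=; (cnorm; lia).
apply: (H p1 c' (rcons p2 c)); by rewrite Ep rcons_cat.
Qed.

Lemma trace_gen n : forall pre w1 w2 : word, size w2 = n ->
  (forall e : nat, count_mem e (pre ++ w1) = count_mem e (pre ++ w2)) ->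
  ordsame (pre ++ w1) (pre ++ w2) -> swstar (pre ++ w1) (pre ++ w2).
Proof.
elim: n => [|n IH] pre w1 w2.
  case: w2 => // _ Hc _; case: w1 Hc => [|a w1] Hc; first exact: ss_refl.
  by move: (Hc a); rewrite !count_cat /= eqxx; (cnorm; lia).
case: w2 => [|d w2] //= [Hs] Hc Ho.
have Hcw e : count_mem e w1 = count_mem e (d :: w2).
  by move: (Hc e); rewrite !count_cat; (cnorm; lia).
have: d \in w1 by rewrite -cnt_gt0 Hcw /= eqxx.
case/first_split=> p [q [Ew Hdp]]; subst w1.
set W1 := pre ++ p ++ d :: q.
have Hb : swstar W1 (pre ++ d :: p ++ q).
  apply: bubble => // p1 c p2 Ep.
  have Hcd : c != d by apply: contraNneq Hdp => <-; rewrite Ep mem_cat mem_head orbT.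
  apply/negPn/negP => Hni.
  have Hk : count_mem c (pre ++ p1) < count_mem c W1.
    rewrite /W1 Ep !count_cat /= eqxx; (cnorm; lia).
  have Hj : count_mem d pre < count_mem d W1.
    rewrite /W1 !count_cat /= eqxx; (cnorm; lia).
  have E1 : evb W1 c (count_mem c (pre ++ p1)) d (count_mem d pre).
    exists (pre ++ p1 ++ [:: c]), (p2 ++ d :: q); split.
      by rewrite /W1 Ep -!catA.
    rewrite !count_cat /= !eqxx ?(negbTE Hcd).
    have : count_mem d p1 = 0.
      by apply/count_memPn; apply: contra Hdp; rewrite Ep mem_cat => ->.
    (cnorm; lia).
  have E2 : evb (pre ++ d :: w2) d (count_mem d pre) c (count_mem c (pre ++ p1)).
    exists (pre ++ [:: d]), w2; rewrite -catA; split => //.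
    rewrite !count_cat /= eqxx (eq_sym d c) (negbTE Hcd); split; (cnorm; lia).
  have := (Ho _ _ _ _ Hcd Hk Hj Hni).1 E1.
  by move/evb_anti; apply.
eapply swstar_trans; first exact Hb.
have -> : pre ++ d :: p ++ q = (pre ++ [:: d]) ++ (p ++ q) by rewrite -catA.
have -> : pre ++ d :: w2 = (pre ++ [:: d]) ++ w2 by rewrite -catA.
have Hcnt e : count_mem e W1 = count_mem e (pre ++ d :: p ++ q).
  exact: swstar_count Hb.
apply: IH => //.
  by move=> e; rewrite -!catA /= -Hcnt; apply: Hc.
move=> c k d' j Hcd' Hk Hj Hni; rewrite -!catA /=.
rewrite -!catA /= -Hcnt in Hk Hj Hni.
rewrite -(@indep_cnt W1) in Hni; last exact: Hcnt.
rewrite -(swstar_evb Hb Hni).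
apply: Ho => //; by rewrite Hcnt.
Qed.

Lemma trace (W1 W2 : word) : (forall e : nat, count_mem e W1 = count_mem e W2) ->
  ordsame W1 W2 -> swstar W1 W2.
Proof. move=> H1 H2; exact: (@trace_gen (size W2) [::] W1 W2). Qed.

Definition subst (sg : nat -> word) (w : word) : word := flatten (map sg w).

Inductive deriv (S : seq identity) : word -> word -> Prop :=
  | d_refl u : deriv S u u
  | d_sym u v : deriv S u v -> deriv S v u
  | d_trans u v w : deriv S u v -> deriv S v w -> deriv S u w
  | d_ax (p s : word) (sg : nat -> word) (l r : word) :
      (l, r) \in S -> deriv S (p ++ subst sg l ++ s) (p ++ subst sg r ++ s).

Lemma d_inst (S : seq identity) (l r : word) (sg : nat -> word) (p s W1 W2 : word) :
  (l, r) \in S -> W1 = p ++ subst sg l ++ s -> W2 = p ++ subst sg r ++ s -> deriv S W1 W2.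
Proof. by move=> H -> ->; apply: d_ax. Qed.

Lemma d_instr (S : seq identity) (l r : word) (sg : nat -> word) (p s W1 W2 : word) :
  (l, r) \in S -> W1 = p ++ subst sg r ++ s -> W2 = p ++ subst sg l ++ s -> deriv S W1 W2.
Proof. by move=> H -> ->; apply: d_sym; apply: d_ax. Qed.

Section Sound.
Variable N : mstruct.
Hypothesis HN : is_monoid N.

Let Hrefl : forall x : car N, meq x x. Proof. by case: HN. Qed.
Let Hsym : forall x y : car N, meq x y -> meq y x. Proof. by case: HN => _ []. Qed.
Let Htrans : forall x y z : car N, meq x y -> meq y z -> meq x z.
Proof. by case: HN => _ [_ []]. Qed.
Let Hcong : forall x x' y y' : car N, meq x x' -> meq y y' -> meq (mop x y) (mop x' y').
Proof. by case: HN => _ [_ [_ []]]. Qed.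
Let Hassoc : forall x y z : car N, meq (mop x (mop y z)) (mop (mop x y) z).
Proof. by case: HN => _ [_ [_ [_ []]]]. Qed.
Let Hone : forall x, meq (mop (mone N) x) x /\ meq (mop x (mone N)) x.
Proof. by case: HN => _ [_ [_ [_ []]]]. Qed.

Lemma eval_cat (phi : nat -> car N) (x y : word) :
  meq (eval phi (x ++ y)) (mop (eval phi x) (eval phi y)).
Proof.
elim: x => [|a x IH] /=; first by apply: Hsym; case: (Hone (eval phi y)).
apply: Htrans (Hcong (Hrefl (phi a)) IH) _; exact: Hassoc.
Qed.

Lemma eval_subst (phi : nat -> car N) (sg : nat -> word) (w : word) :
  meq (eval phi (subst sg w)) (eval (fun i => eval phi (sg i)) w).
Proof.
elim: w => [|a w IH] /=; first exact: Hrefl.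
apply: Htrans (eval_cat _ _ _) _; exact: Hcong.
Qed.

Lemma deriv_sound (S : seq identity) (u v : word) :
  (forall id, id \in S -> sat N id) -> deriv S u v ->
  forall phi : nat -> car N, meq (eval phi u) (eval phi v).
Proof.
move=> HS; elim=> [w|w1 w2 _ IH|w1 w2 w3 _ IH1 _ IH2|p s sg l r Hin] phi.
- exact: Hrefl.
- exact: Hsym.
- exact: Htrans (IH2 phi).
apply: Htrans (eval_cat _ _ _) _; apply: Hsym; apply: Htrans (eval_cat _ _ _) _.
apply: Hcong; first exact: Hrefl.
apply: Htrans (eval_cat _ _ _) _; apply: Hsym; apply: Htrans (eval_cat _ _ _) _.
apply: Hcong; last exact: Hrefl.
apply: Htrans (eval_subst _ _ _) _; apply: Hsym; apply: Htrans (eval_subst _ _ _) _.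
apply: Hsym; exact: (HS _ Hin (fun i => eval phi (sg i))).
Qed.

Lemma sat_deriv (S : seq identity) (u v : word) :
  (forall id, id \in S -> sat N id) -> deriv S u v -> sat N (u, v).
Proof. move=> HS Hd phi; exact: deriv_sound Hd phi. Qed.

End Sound.

Definition sg5 (X Y T S Z : word) (i : nat) : word := nth [::] [:: X; Y; T; S; Z] i.

Definition i1a : identity := ([:: vx; vt; vs; vx], [:: vx; vt; vx; vs; vx]).
Definition i1b : identity := ([:: vx; vy; vx; vy], [:: vy; vx; vy; vx]).
Definition i2A : identity := ([:: vx; vt; vx], [:: vx; vt; vx; vx]).
Definition i2B : identity := ([:: vx; vt; vy; vs; vx; vy], [:: vx; vt; vy; vs; vy; vx]).
Definition i2C : identity := ([:: vx; vy; vt; vx; vs; vy], [:: vy; vx; vt; vx; vs; vy]).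
Definition i2D : identity := ([:: vx; vz; vx; vt; vx; vs; vx], [:: vx; vz; vx; vt; vs; vx]).
Lemma i1a_in : i1a \in Sigma1. Proof. by rewrite !inE eqxx ?orbT. Qed.
Lemma i1b_in : i1b \in Sigma1. Proof. by rewrite !inE eqxx ?orbT. Qed.
Lemma i2A_in : i2A \in Sigma2. Proof. by rewrite !inE eqxx ?orbT. Qed.
Lemma i2B_in : i2B \in Sigma2. Proof. by rewrite !inE eqxx ?orbT. Qed.
Lemma i2C_in : i2C \in Sigma2. Proof. by rewrite !inE eqxx ?orbT. Qed.
Lemma i2D_in : i2D \in Sigma2. Proof. by rewrite !inE eqxx ?orbT. Qed.

Ltac lsimp := rewrite /subst /sg5 /vx /vy /vt /vs /vz /=;
  repeat (rewrite -catA /=); rewrite ?cats0.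

Lemma S1_del (P Q : word) (x : nat) : x \in P -> x \in Q ->
  deriv Sigma1 (P ++ x :: Q) (P ++ Q).
Proof.
case/mem_split=> P1 [T ->] /mem_split [S [Q2 ->]].
apply: (@d_instr _ _ _ (sg5 [:: x] [::] T S [::]) P1 Q2 _ _ i1a_in).
  by lsimp.
by lsimp.
Qed.

Lemma S1_swP (P Q : word) (x y : nat) : x != y -> x \in P -> y \in P ->
  deriv Sigma1 (P ++ x :: y :: Q) (P ++ y :: x :: Q).
Proof.
move=> Hxy Hx Hy.
have Hy' : y \in x :: y :: Q by rewrite !inE eqxx orbT.
apply: d_trans (d_sym (S1_del Hy Hy')) _.
have Hx' : x \in y :: x :: y :: Q by rewrite !inE eqxx orbT.
apply: d_trans (d_sym (S1_del Hx Hx')) _.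
apply: (@d_trans _ _ (P ++ y :: x :: y :: x :: Q)).
  by apply: (@d_inst _ _ _ (sg5 [:: x] [:: y] [::] [::] [::]) P Q _ _ i1b_in).
have Hy2 : y \in x :: y :: x :: Q by rewrite !inE eqxx orbT.
apply: d_trans (S1_del Hy Hy2) _.
have Hx2 : x \in y :: x :: Q by rewrite !inE eqxx orbT.
exact: (S1_del Hx Hx2).
Qed.

Lemma S1_swQ (P Q : word) (x y : nat) : x != y -> x \in Q -> y \in Q ->
  deriv Sigma1 (P ++ x :: y :: Q) (P ++ y :: x :: Q).
Proof.
move=> Hxy Hx Hy.
have E1 : forall (l : word) (R : word), P ++ l ++ R = (P ++ l) ++ R by move=> *; rewrite catA.
have Hx1 : x \in P ++ [:: x; y] by rewrite mem_cat mem_head orbT.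
apply: (@d_trans _ _ (P ++ x :: y :: x :: Q)).
  have := d_sym (S1_del Hx1 Hx); by rewrite -!catA.
have Hy1 : y \in P ++ [:: x; y; x] by rewrite mem_cat !inE eqxx !orbT.
apply: (@d_trans _ _ (P ++ x :: y :: x :: y :: Q)).
  have := d_sym (S1_del Hy1 Hy); by rewrite -!catA.
apply: (@d_trans _ _ (P ++ y :: x :: y :: x :: Q)).
  by apply: (@d_inst _ _ _ (sg5 [:: x] [:: y] [::] [::] [::]) P Q _ _ i1b_in).
have Hy3 : y \in P ++ [:: y; x] by rewrite mem_cat mem_head orbT.
have Hy4 : y \in x :: Q by rewrite inE Hy orbT.
apply: (@d_trans _ _ (P ++ y :: x :: x :: Q)).
  have := S1_del Hy3 Hy4; by rewrite -!catA.
have Hx3 : x \in P ++ [:: y; x] by rewrite mem_cat !inE eqxx !orbT.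
have := S1_del Hx3 Hx; by rewrite -!catA.
Qed.

Lemma S1_sw (W W' : word) : sw W W' -> deriv Sigma1 W W'.
Proof.
case=> P [x [y [Q [-> [-> [Hxy [[H1 H2]|[H1 H2]]]]]]]].
  exact: S1_swP.
exact: S1_swQ.
Qed.

Lemma S2_add (P Q : word) (x : nat) : x \in P ->
  deriv Sigma2 (P ++ x :: Q) (P ++ x :: x :: Q).
Proof.
case/mem_split=> P1 [T ->].
apply: (@d_inst _ _ _ (sg5 [:: x] [::] T [::] [::]) P1 Q _ _ i2A_in).
  by lsimp.
by lsimp.
Qed.

Lemma two_split (x : nat) (P : word) : 1 < count_mem x P ->
  exists P1 Z T, P = P1 ++ x :: Z ++ x :: T.
Proof.
move=> H; have: x \in P by rewrite -cnt_gt0; apply: ltnW.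
case/first_split=> A [B [EP HA]]; subst P.
move: H; rewrite count_cat (count_memPn HA) /= eqxx add0n add1n ltnS cnt_gt0.
case/mem_split=> Z [T ->]; by exists A, Z, T.
Qed.

Lemma S2_del (P Q : word) (x : nat) : 1 < count_mem x P -> x \in Q ->
  deriv Sigma2 (P ++ x :: Q) (P ++ Q).
Proof.
case/two_split=> P1 [Z [T ->]] /mem_split [S [Q2 ->]].
apply: (@d_inst _ _ _ (sg5 [:: x] [::] T S Z) P1 Q2 _ _ i2D_in).
- by lsimp.
- by lsimp.
Qed.

Lemma S2_swP (P Q : word) (x y : nat) : x != y -> x \in P -> y \in P ->
  deriv Sigma2 (P ++ x :: y :: Q) (P ++ y :: x :: Q).
Proof.
move=> Hxy /mem_split [A [B ->]] Hy.
case: (boolP (y \in B)) => HyB.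
  case/mem_split: HyB => T [S ->].
  by apply: (@d_inst _ _ _ (sg5 [:: x] [:: y] T S [::]) A Q _ _ i2B_in); lsimp.
have : y \in A.
  move: Hy; rewrite mem_cat inE (negbTE HyB) orbF (eq_sym y x) (negbTE Hxy) orbF.
  by [].
case/mem_split=> A1 [A2 ->].
by apply: (@d_instr _ _ _ (sg5 [:: y] [:: x] A2 B [::]) A1 Q _ _ i2B_in); lsimp.
Qed.

Lemma S2_swQ (P Q : word) (x y : nat) : x != y -> x \in Q -> y \in Q ->
  deriv Sigma2 (P ++ x :: y :: Q) (P ++ y :: x :: Q).
Proof.
move=> Hxy /mem_split [A [B ->]] Hy.
case: (boolP (y \in B)) => HyB.
  case/mem_split: HyB => S1 [S2 ->].
  by apply: (@d_inst _ _ _ (sg5 [:: x] [:: y] A S1 [::]) P S2 _ _ i2C_in); lsimp.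
have : y \in A.
  move: Hy; rewrite mem_cat inE (negbTE HyB) orbF (eq_sym y x) (negbTE Hxy) orbF.
  by [].
case/mem_split=> A1 [A2 ->].
by apply: (@d_instr _ _ _ (sg5 [:: y] [:: x] A1 A2 [::]) P B _ _ i2C_in); lsimp.
Qed.

Lemma S2_sw (W W' : word) : sw W W' -> deriv Sigma2 W W'.
Proof.
case=> P [x [y [Q [-> [-> [Hxy [[H1 H2]|[H1 H2]]]]]]]].
  exact: S2_swP.
exact: S2_swQ.
Qed.

Lemma swstar_deriv (S : seq identity) (W W' : word) :
  (forall U U', sw U U' -> deriv S U U') -> swstar W W' -> deriv S W W'.
Proof.
move=> H; elim=> [w|u v w Hs _ IH]; first exact: d_refl.
exact: d_trans (H _ _ Hs) IH.
Qed.

Lemma split3 (x : nat) (w : word) : 2 < count_mem x w ->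
  exists P Q, w = P ++ x :: Q /\ x \in P /\ x \in Q.
Proof.
move=> H; have : x \in w by rewrite -cnt_gt0; clia.
case/first_split=> A [B [E HA]]; subst w.
move: H; rewrite count_cat (count_memPn HA) /= eqxx add0n add1n ltnS => H.
have : x \in B by rewrite -cnt_gt0; clia.
case/first_split=> B1 [B2 [E HB]]; subst B.
move: H; rewrite count_cat (count_memPn HB) /= eqxx add0n add1n ltnS cnt_gt0 => H.
exists (A ++ x :: B1), B2; rewrite -catA; split => //; split => //.
by rewrite mem_cat mem_head orbT.
Qed.

Lemma split4 (x : nat) (w : word) : 3 < count_mem x w ->
  exists P Q, w = P ++ x :: Q /\ 1 < count_mem x P /\ x \in Q.
Proof.
move=> H; have : x \in w by rewrite -cnt_gt0; clia.
case/first_split=> A [B [E HA]]; subst w.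
move: H; rewrite count_cat (count_memPn HA) /= eqxx add0n add1n ltnS => H.
case: (split3 H) => P [Q [-> [H1 H2]]].
exists (A ++ x :: P), Q; rewrite -catA; split => //; split => //.
rewrite count_cat /= eqxx (count_memPn HA) add0n add1n ltnS cnt_gt0 //.
Qed.

Lemma split2 (x : nat) (w : word) : 1 < count_mem x w ->
  exists P Q, w = P ++ x :: Q /\ x \in P.
Proof.
move=> H; have : x \in w by rewrite -cnt_gt0; clia.
case/first_split=> A [B [E HA]]; subst w.
move: H; rewrite count_cat (count_memPn HA) /= eqxx add0n add1n ltnS cnt_gt0.
case/mem_split => B1 [B2 ->].
exists (A ++ x :: B1), B2; rewrite -catA; split => //.
by rewrite mem_cat mem_head orbT.
Qed.

Lemma count_del (P Q : word) (x e : nat) :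
  count_mem e (P ++ x :: Q) = count_mem e (P ++ Q) + (x == e).
Proof. rewrite !count_cat /=; case: (x == e) => /=; clia. Qed.

Lemma NF1 (n : nat) : forall w : word, size w <= n ->
  exists w', deriv Sigma1 w w' /\ forall c : nat, count_mem c w' = minn (count_mem c w) 2.
Proof.
elim: n => [|n IH] w Hs.
  move: Hs; rewrite leqn0 => /nilP ->; exists [::]; split; first exact: d_refl.
  by move=> c.
case: (boolP (has (fun c => 2 < count_mem c w) w)).
  case/hasP=> c _ Hc; case: (split3 Hc) => P [Q [E [H1 H2]]]; subst w.
  have [w' [Hd Hw]] : exists w', deriv Sigma1 (P ++ Q) w' /\
      forall c, count_mem c w' = minn (count_mem c (P ++ Q)) 2.
    apply: IH; move: Hs; rewrite !size_cat /=; clia.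
  exists w'; split; first exact: d_trans (S1_del H1 H2) Hd.
  move=> e; rewrite Hw count_del; case: (eqVneq c e) => [<-|Hne] /=; last by rewrite addn0.
  move: Hc; rewrite count_del eqxx /= => Hc.
  have H5 : 2 <= count_mem c (P ++ Q) by clia.
  by rewrite (minn_idPr H5) (minn_idPr (leq_trans H5 (leq_addr _ _))).
move/hasPn=> H; exists w; split; first exact: d_refl.
move=> c; case: (boolP (c \in w)) => Hc.
  by move: (H c Hc); rewrite ltnNge negbK => Hle; rewrite (minn_idPl Hle).
by rewrite (count_memPn Hc).
Qed.

Lemma NF2a (n : nat) : forall w : word, size w <= n ->
  exists w', deriv Sigma2 w w' /\ forall c : nat, count_mem c w' = minn (count_mem c w) 3.
Proof.
elim: n => [|n IH] w Hs.
  move: Hs; rewrite leqn0 => /nilP ->; exists [::]; split; first exact: d_refl.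
  by move=> c.
case: (boolP (has (fun c => 3 < count_mem c w) w)).
  case/hasP=> c _ Hc; case: (split4 Hc) => P [Q [E [H1 H2]]]; subst w.
  have [w' [Hd Hw]] : exists w', deriv Sigma2 (P ++ Q) w' /\
      forall c, count_mem c w' = minn (count_mem c (P ++ Q)) 3.
    apply: IH; move: Hs; rewrite !size_cat /=; clia.
  exists w'; split; first exact: d_trans (S2_del H1 H2) Hd.
  move=> e; rewrite Hw count_del; case: (eqVneq c e) => [<-|Hne] /=; last by rewrite addn0.
  move: Hc; rewrite count_del eqxx /= => Hc.
  have H5 : 3 <= count_mem c (P ++ Q) by clia.
  by rewrite (minn_idPr H5) (minn_idPr (leq_trans H5 (leq_addr _ _))).
move/hasPn=> H; exists w; split; first exact: d_refl.
move=> c; case: (boolP (c \in w)) => Hc.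
  by move: (H c Hc); rewrite ltnNge negbK => Hle; rewrite (minn_idPl Hle).
by rewrite (count_memPn Hc).
Qed.

Lemma count_lt_pred (T : eqType) (p' p : pred T) (L : seq T) (c : T) :
  (forall x, p' x -> p x) -> c \in L -> p c -> ~~ p' c -> count p' L < count p L.
Proof.
move=> Hsub; elim: L => [|a L IH] //; rewrite inE => /orP [/eqP <-|Hc] Hp Hp'.
  rewrite /= Hp (negbTE Hp') add0n add1n ltnS.
  by apply: sub_count => x; apply: Hsub.
move: (IH Hc Hp Hp') => /= H.
by case: (p' a) (Hsub a) => [->//|_] /=; case: (p a) => /=; lia.
Qed.

Lemma NF2b (k : nat) : forall (L w : word),
  count (fun c => count_mem c w == 2) L <= k ->
  (forall c, count_mem c w <= 3) -> (forall c, c \in w -> c \in L) ->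
  exists w', deriv Sigma2 w w' /\
    forall c : nat, count_mem c w' = if count_mem c w == 2 then 3 else count_mem c w.
Proof.
elim: k => [|k IH] L w Hk H3 HL.
  exists w; split; first exact: d_refl.
  move=> c; case: eqP => // Hc2.
  have Hc : c \in w by rewrite -cnt_gt0 Hc2.
  have : 0 < count (fun c => count_mem c w == 2) L.
    rewrite -has_count; apply/hasP; exists c; [exact: HL | by rewrite Hc2].
  by move: Hk; rewrite leqn0 => /eqP ->.
case: (boolP (has (fun c => count_mem c w == 2) w)).
  case/hasP=> c Hcw /eqP Hc; case: (@split2 c w) => [|P [Q [E HP]]]; first by rewrite Hc.
  subst w.
  have Hcnt e : count_mem e (P ++ c :: c :: Q) = count_mem e (P ++ c :: Q) + (c == e).
    by rewrite !count_cat /=; case: (c == e) => /=; clia.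
  have [w' [Hd Hw]] : exists w', deriv Sigma2 (P ++ c :: c :: Q) w' /\
      forall e, count_mem e w' =
        if count_mem e (P ++ c :: c :: Q) == 2 then 3 else count_mem e (P ++ c :: c :: Q).
    apply: (IH L).
    - rewrite -ltnS; apply: leq_trans Hk; apply: (count_lt_pred _ (HL _ Hcw)).
      + move=> e /=; rewrite Hcnt; case: (eqVneq c e) => [<-|Hne]; first by rewrite Hc.
        by rewrite addn0.
      + by rewrite /= Hc.
      + by rewrite /= Hcnt Hc eqxx.
    - move=> e; rewrite Hcnt; case: (eqVneq c e) => [<-|Hne]; first by rewrite Hc.
      by rewrite addn0.
    - move=> e He; apply: HL; move: He; rewrite !mem_cat !inE.
      by case: (e \in P); case: (e == c); case: (e \in Q).
  exists w'; split; first exact: d_trans (S2_add _ HP) Hd.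
  move=> e; rewrite Hw Hcnt; case: (eqVneq c e) => [<-|Hne]; first by rewrite Hc.
  by rewrite addn0.
move/hasPn=> H; exists w; split; first exact: d_refl.
move=> c; case: (boolP (c \in w)) => Hc; first by rewrite (negbTE (H c Hc)).
by rewrite (count_memPn Hc).
Qed.

Lemma NF2 (w : word) : exists w', deriv Sigma2 w w' /\
  forall c : nat, count_mem c w' = if 1 < count_mem c w then 3 else count_mem c w.
Proof.
case: (@NF2a (size w) w (leqnn _)) => w1 [Hd1 Hw1].
case: (@NF2b (size w1) w1 w1) => //.
- by apply: leq_trans (count_size _ _) _.
- by move=> c; rewrite Hw1 geq_minr.
move=> w' [Hd Hw]; exists w'; split; first exact: d_trans Hd1 Hd.
move=> c; rewrite Hw Hw1.
case: (ltnP 1 (count_mem c w)) => H.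
  case: (ltnP 2 (count_mem c w)) => H'.
    by rewrite (minn_idPr H').
  have -> : count_mem c w = 2 by apply/eqP; rewrite eqn_leq H'.
  by [].
have H3 : count_mem c w <= 3 by clia.
rewrite (minn_idPl H3).
by case: eqP => // E; rewrite E in H.
Qed.

Record FM := MkFM { fn : nat; ftab : seq (seq nat) }.

Definition clamp (F : FM) (i : nat) : nat := if i <= fn F then i else fn F.
Definition mulF (F : FM) (i j : nat) : nat :=
  nth (fn F) (nth [::] (ftab F) (clamp F i)) (clamp F j).
Definition MF (F : FM) : mstruct :=
  @MStruct nat (fun x y => clamp F x = clamp F y) (mulF F) 0.
Definition evalF (F : FM) (phi : nat -> nat) (w : word) : nat :=
  foldr (fun a acc => mulF F (phi a) acc) 0 w.

Lemma evalF_eval (F : FM) (phi : nat -> nat) (w : word) :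
  @eval (MF F) phi w = evalF F phi w.
Proof. by []. Qed.

Definition rng (F : FM) : seq nat := iota 0 (fn F).+1.

Definition goodb (F : FM) : bool :=
  [&& all (fun i => all (fun j => mulF F i j <= fn F) (rng F)) (rng F),
      all (fun i => all (fun j => all (fun k =>
        mulF F i (mulF F j k) == mulF F (mulF F i j) k) (rng F)) (rng F)) (rng F) &
      all (fun i => [&& mulF F 0 i == i, mulF F i 0 == i,
                mulF F (fn F) i == fn F & mulF F i (fn F) == fn F]) (rng F)].

Section FMtheory.
Variable F : FM.
Hypothesis HF : goodb F.

Lemma mem_rng i : (i \in rng F) = (i <= fn F).
Proof. by rewrite mem_iota add0n ltnS. Qed.

Lemma clamp_le i : clamp F i <= fn F.
Proof. by rewrite /clamp; case: ifP. Qed.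

Lemma clamp_id i : i <= fn F -> clamp F i = i.
Proof. by rewrite /clamp => ->. Qed.

Lemma mulF_clampl i j : mulF F (clamp F i) j = mulF F i j.
Proof. by rewrite /mulF (clamp_id (clamp_le i)). Qed.

Lemma mulF_clampr i j : mulF F i (clamp F j) = mulF F i j.
Proof. by rewrite /mulF (clamp_id (clamp_le j)). Qed.

Lemma crng i : clamp F i \in rng F.
Proof. by rewrite mem_rng clamp_le. Qed.

Lemma mulF_le i j : mulF F i j <= fn F.
Proof.
case/and3P: HF => /allP H _ _.
rewrite -mulF_clampl -mulF_clampr.
by move/allP: (H _ (crng i)) => /(_ _ (crng j)).
Qed.

Lemma mulF_assoc i j k : mulF F i (mulF F j k) = mulF F (mulF F i j) k.
Proof.
case/and3P: HF => _ /allP H _.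
have E : mulF F i (mulF F j k) = mulF F (clamp F i) (mulF F (clamp F j) (clamp F k)).
  by rewrite mulF_clampl mulF_clampl mulF_clampr.
have E' : mulF F (mulF F i j) k = mulF F (mulF F (clamp F i) (clamp F j)) (clamp F k).
  by rewrite mulF_clampl mulF_clampr mulF_clampr.
rewrite E E'.
by move/allP: (H _ (crng i)) => /(_ _ (crng j)) /allP /(_ _ (crng k)) /eqP.
Qed.

Lemma F3 i : i <= fn F -> [&& mulF F 0 i == i, mulF F i 0 == i,
                mulF F (fn F) i == fn F & mulF F i (fn F) == fn F].
Proof. by case/and3P: HF => _ _ /allP H Hi; apply: H; rewrite mem_rng. Qed.

Lemma mulF_1l i : i <= fn F -> mulF F 0 i = i.
Proof. by move/F3 => /and4P [/eqP]. Qed.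

Lemma mulF_1r i : i <= fn F -> mulF F i 0 = i.
Proof. by move/F3 => /and4P [_ /eqP]. Qed.

Lemma mulF_0l i : mulF F (fn F) i = fn F.
Proof. by rewrite -mulF_clampr; move: (F3 (clamp_le i)) => /and4P [_ _ /eqP]. Qed.

Lemma mulF_0r i : mulF F i (fn F) = fn F.
Proof. by rewrite -mulF_clampl; move: (F3 (clamp_le i)) => /and4P [_ _ _ /eqP]. Qed.

Lemma evalF_le phi w : evalF F phi w <= fn F.
Proof. case: w => [|a w] /=; [exact: leq0n | exact: mulF_le]. Qed.

Lemma evalF_cat phi x y : evalF F phi (x ++ y) = mulF F (evalF F phi x) (evalF F phi y).
Proof.
elim: x => [|a x IH] /=; first by rewrite mulF_1l // evalF_le.
by rewrite IH mulF_assoc.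
Qed.

Lemma evalF_clamp phi w : evalF F phi w = evalF F (fun i => clamp F (phi i)) w.
Proof. by elim: w => [|a w IH] //=; rewrite IH mulF_clampl. Qed.

Lemma evalF_ext phi psi w : (forall c, c \in w -> phi c = psi c) ->
  evalF F phi w = evalF F psi w.
Proof.
elim: w => [|a w IH] //= H; rewrite H ?mem_head // IH // => c Hc.
by apply: H; rewrite inE Hc orbT.
Qed.

Lemma MF_monoid : is_monoid (MF F).
Proof.
split; first by []. split; first by [].
split; first by move=> x y z /= -> ->.
split; first by move=> x x' y y' /= Hx Hy; rewrite -mulF_clampl Hx mulF_clampl
   -mulF_clampr Hy mulF_clampr.
split; first by move=> x y z /=; rewrite mulF_assoc.
move=> x /=; rewrite -mulF_clampr -[mulF F x 0]mulF_clampl.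
by rewrite mulF_1l ?mulF_1r ?clamp_le // (clamp_id (clamp_le x)).
Qed.

Lemma satMF u v : sat (MF F) (u, v) <-> forall phi, evalF F phi u = evalF F phi v.
Proof.
split=> H phi.
  by move: (H phi) => /=; rewrite !evalF_eval !clamp_id ?evalF_le.
by rewrite /= !evalF_eval H.
Qed.

End FMtheory.

Fixpoint tuples (k : nat) (s : seq nat) : seq (seq nat) :=
  if k is k'.+1 then flatten [seq [seq x :: t | t <- tuples k' s] | x <- s] else [:: [::]].

Lemma mem_tuples k s l : size l = k -> all (fun x => x \in s) l -> l \in tuples k s.
Proof.
elim: k l => [|k IH] [|x l] //= [Hs] /andP [Hx Hl].
apply/flattenP; exists [seq x :: t | t <- tuples k s]; first by apply: map_f.
by apply: map_f; apply: IH.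
Qed.

Definition checkF (F : FM) (id : identity) : bool :=
  let vars := undup (id.1 ++ id.2) in
  all (fun l => evalF F (fun i => nth 0 l (index i vars)) id.1 ==
                evalF F (fun i => nth 0 l (index i vars)) id.2)
      (tuples (size vars) (rng F)).

Lemma checkF_sat (F : FM) (id : identity) : goodb F -> checkF F id -> sat (MF F) id.
Proof.
case: id => u v HF /allP H; apply/(satMF HF) => phi.
set vars := undup (u ++ v).
set l := [seq clamp F (phi i) | i <- vars].
have Hl : l \in tuples (size vars) (rng F).
  apply: mem_tuples; first by rewrite size_map.
  by apply/allP => x /mapP [i _ ->]; rewrite mem_rng clamp_le.
move/eqP: (H l Hl) => /= E.
have Hext w : {subset w <= vars} ->
    evalF F phi w = evalF F (fun i => nth 0 l (index i vars)) w.
  move=> Hw; rewrite evalF_clamp; apply: evalF_ext => c Hc.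
  by rewrite (nth_map 0) ?index_mem ?Hw // nth_index // Hw.
rewrite !Hext // => c Hc; rewrite mem_undup mem_cat Hc ?orbT //.
Qed.

Definition homb (F F' : FM) (h : nat -> nat) : bool :=
  [&& h 0 == 0,
  all (fun i => (h i <= fn F') &&
     all (fun j => h (mulF F i j) == mulF F' (h i) (h j)) (rng F)) (rng F) &
  all (fun i => all (fun j => (h i == h j) ==> (i == j)) (rng F)) (rng F)].

Lemma hom_sat (F F' : FM) (h : nat -> nat) (id : identity) :
  goodb F -> goodb F' -> homb F F' h -> sat (MF F') id -> sat (MF F) id.
Proof.
case: id => u v HF HF' /and3P [/eqP H0 /allP Hh /allP Hi] /(satMF HF') H.
apply/(satMF HF) => phi; rewrite (evalF_clamp _ phi u) (evalF_clamp _ phi v).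
set phi' := fun i => clamp F (phi i).
have E w : evalF F' (fun i => h (phi' i)) w = h (evalF F phi' w).
  elim: w => [|a w IH] //=; rewrite IH.
  have Ha : phi' a \in rng F by rewrite mem_rng clamp_le.
  have Hw : evalF F phi' w \in rng F by rewrite mem_rng evalF_le.
  by case/andP: (Hh _ Ha) => _ /allP /(_ _ Hw) /eqP ->.
move: (H (fun i => h (phi' i))); rewrite !E => Eh.
have Hu : evalF F phi' u \in rng F by rewrite mem_rng evalF_le.
have Hv : evalF F phi' v \in rng F by rewrite mem_rng evalF_le.
by move/allP: (Hi _ Hu) => /(_ _ Hv); rewrite Eh eqxx => /eqP.
Qed.

Lemma sat_sym (N : mstruct) u v : is_monoid N -> sat N (u, v) -> sat N (v, u).
Proof. by case=> _ [Hs _] H phi; apply: Hs; apply: H. Qed.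

Lemma sat_trans (N : mstruct) u v w : is_monoid N -> sat N (u, v) -> sat N (v, w) -> sat N (u, w).
Proof. by case=> _ [_ [Ht _]] H1 H2 phi; apply: Ht (H1 phi) (H2 phi). Qed.

Definition classify (reps : seq word) (w : word) : nat := find (fun r => lamb w r) reps.
Definition mktab (reps : seq word) : seq (seq nat) :=
  let n := size reps in
  [seq [seq (if (i < n) && (j < n) then classify reps (nth [::] reps i ++ nth [::] reps j) else n)
     | j <- iota 0 n.+1] | i <- iota 0 n.+1].

Definition reps10 : seq word :=
  [:: [::]; [:: la]; [:: la; la]; [:: lb]; [:: lb; lb]; [:: la; lb]; [:: la; la; lb];
      [:: la; lb; lb]; [:: la; la; lb; lb]].
Definition tab10 := Eval vm_compute in mktab reps10.
Definition F10 : FM := MkFM 9 tab10.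

Definition repsata : seq word :=
  [:: [::]; [:: la]; [:: la; la]; [:: lt]; [:: la; lt]; [:: lt; la]; [:: lt; la; la];
      [:: la; lt; la]].
Definition tabata := Eval vm_compute in mktab repsata.
Definition Fata : FM := MkFM 8 tabata.

Definition repsatab : seq word :=
  [:: [::]; [:: la]; [:: la; la]; [:: lt]; [:: la; lt]; [:: lt; la]; [:: lt; la; la];
      [:: la; lt; la]; [:: lb]; [:: lb; lb]; [:: la; lb]; [:: la; la; lb]; [:: la; lb; lb];
      [:: la; la; lb; lb]; [:: lt; la; lb]; [:: lt; la; la; lb]; [:: lt; la; lb; lb];
      [:: lt; la; la; lb; lb]; [:: la; lt; la; la; lb]; [:: la; lt; la; la; lb; lb]].
Definition tabatab := Eval vm_compute in mktab repsatab.
Definition Fatab : FM := MkFM 20 tabatab.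

Definition A01_to_nat (x : A01) : nat :=
  match x with A1 => 0 | Ae => 1 | Af => 2 | Aef => 3 | A0 => 4 end.
Definition nat_to_A01 (i : nat) : A01 :=
  match i with 0 => A1 | 1 => Ae | 2 => Af | 3 => Aef | _ => A0 end.
Definition tabA := Eval vm_compute in
  [seq [seq A01_to_nat (A01_mul (nat_to_A01 i) (nat_to_A01 j)) | j <- iota 0 5] | i <- iota 0 5].
Definition FA : FM := MkFM 4 tabA.

Lemma goodFA : goodb FA. Proof. by vm_compute. Qed.
Lemma goodF10 : goodb F10. Proof. by vm_compute. Qed.
Lemma goodFata : goodb Fata. Proof. by vm_compute. Qed.
Lemma goodFatab : goodb Fatab. Proof. by vm_compute. Qed.

Lemma FA_S1 : all (checkF FA) Sigma1. Proof. by vm_compute. Qed.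
Lemma F10_S1 : all (checkF F10) Sigma1. Proof. by vm_compute. Qed.
Lemma FA_S2 : all (checkF FA) Sigma2. Proof. by vm_compute. Qed.
Lemma Fata_S2 : all (checkF Fata) Sigma2. Proof. by vm_compute. Qed.
Lemma Fatab_S2 : all (checkF Fatab) Sigma2. Proof. by vm_compute. Qed.

Section Corr.
Variable tau : word -> word -> Prop.
Variable taub : word -> word -> bool.
Hypothesis tauP : forall u v, reflect (tau u v) (taub u v).
Hypothesis tau_refl : forall u, tau u u.
Hypothesis tau_sym : forall u v, tau u v -> tau v u.
Hypothesis tau_trans : forall u v w, tau u v -> tau v w -> tau u w.
Hypothesis tau_cat : forall p u v s, tau u v -> tau (p ++ u ++ s) (p ++ v ++ s).
Variable W : word -> Prop.
Variable F : FM.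
Hypothesis HF : goodb F.
Variable g : nat -> nat.
Variable rep : nat -> word.
Hypothesis rep0 : rep 0 = [::].
Hypothesis K1c : forall c z, z < fn F -> mulF F (g c) z < fn F ->
  taub (c :: rep z) (rep (mulF F (g c) z)).
Hypothesis Rdist : forall z1 z2, z1 < fn F -> z2 < fn F -> taub (rep z1) (rep z2) -> z1 = z2.
Hypothesis Rnz : forall z, z < fn F -> nonzero tau W (rep z).
Hypothesis Hrep : forall z, z <= fn F -> evalF F g (rep z) = z.
Hypothesis G5 : forall y u, W u -> tau y u -> evalF F g y < fn F.

Local Notation cls := (evalF F g).

Lemma cls_lt x : cls x < fn F \/ cls x = fn F.
Proof. by move: (evalF_le HF g x); rewrite leq_eqVlt => /orP [/eqP ->|->]; auto. Qed.

Lemma K1 x : cls x < fn F -> tau x (rep (cls x)).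
Proof.
elim: x => [|a x IH] /=; first by rewrite rep0.
case: (cls_lt x) => [Hx|->]; last by rewrite mulF_0r // ltnn.
move=> H; apply: tau_trans _ (elimT (tauP _ _) (K1c Hx H)).
have := tau_cat [:: a] [::] (IH Hx); by rewrite !cats0.
Qed.

Lemma nz_inv x r : tau x r -> nonzero tau W r -> nonzero tau W x.
Proof.
move=> Hx [u [p [s [Hu Ht]]]]; exists u, p, s; split => //.
exact: tau_trans (tau_cat p s Hx) Ht.
Qed.

Lemma K2 x : nonzero tau W x -> cls x < fn F.
Proof.
case=> u [p [s [Hu Ht]]]; move: (G5 Hu Ht); rewrite !(evalF_cat HF).
by case: (cls_lt x) => // ->; rewrite mulF_0l // mulF_0r // ltnn.
Qed.

Lemma nz_cls x : nonzero tau W x <-> cls x < fn F.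
Proof.
split; first exact: K2.
move=> H; apply: nz_inv (K1 H) _; exact: Rnz.
Qed.

Lemma H1 x y : meq (m := Mtau tau W) x y <-> cls x = cls y.
Proof.
rewrite /=; split.
  case=> [[Hx Hy]|[Hx [Hy Ht]]].
    case: (cls_lt x) => [/nz_cls //|->]; case: (cls_lt y) => [/nz_cls //|->] //.
  move/K2: Hx => Hx; move/K2: Hy => Hy; apply: Rdist => //; apply/tauP.
  apply: tau_trans (tau_sym (K1 Hx)) _; exact: tau_trans Ht (K1 Hy).
move=> E; case: (cls_lt x) => [Hx|Hx].
  have Hy : cls y < fn F by rewrite -E.
  right; split; first by apply/nz_cls.
  split; first by apply/nz_cls.
  apply: tau_trans (K1 Hx) _; rewrite E; exact: tau_sym (K1 Hy).
left; split => /nz_cls; by rewrite ?Hx -?E ?Hx ltnn.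
Qed.

Lemma cls_eval (psi : nat -> word) (w : word) :
  cls (@eval (Mtau tau W) psi w) = evalF F (fun i => cls (psi i)) w.
Proof. by elim: w => [|a w IH] //=; rewrite (evalF_cat HF) IH. Qed.

Lemma corr (id : identity) : sat (Mtau tau W) id <-> sat (MF F) id.
Proof.
case: id => u v; split => H.
  apply/(satMF HF) => phi.
  move: (H (fun i => rep (clamp F (phi i)))) => /H1; rewrite /= !cls_eval.
  rewrite (evalF_clamp F phi u) (evalF_clamp F phi v).
  have E w : evalF F (fun i => cls (rep (clamp F (phi i)))) w =
             evalF F (fun i => clamp F (phi i)) w.
    by apply: evalF_ext => c _; rewrite Hrep // clamp_le.
  by rewrite !E.
move=> psi; apply/H1; rewrite /= !cls_eval.
by move/(satMF HF): H; apply.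
Qed.

End Corr.

Lemma red_cons a X : red (a :: X) = if ohead (red X) == Some a then red X else a :: red X.
Proof. by []. Qed.

Lemma red_nseq_cat (c : nat) e s : 0 < e -> red (nseq e c ++ s) = red (c :: s).
Proof.
case: e => [|e] // _; elim: e => [|e IH] //.
by rewrite [nseq _ _ ++ _]/= red_cons IH ohead_red eqxx.
Qed.

Lemma red_nil (y : word) : red y = [::] -> y = [::].
Proof. by case: y => // a w; move: (ohead_red a w); case: (red (a :: w)). Qed.

Lemma red_inv (c : nat) (r y : word) : red y = c :: r ->
  exists e y', 0 < e /\ y = nseq e c ++ y' /\ red y' = r.
Proof.
elim: y => [|a w IH] //; rewrite red_cons.
case: eqP => [Hh E|_ [-> <-]]; last by exists 1, w.
rewrite E in Hh; case: Hh => Hca; subst c; case: (IH E) => e [y' [He [-> Hr]]].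
by exists e.+1, y'.
Qed.

Definition powF (F : FM) (z e : nat) : nat := iter e (mulF F z) 0.

Lemma evalF_nseq (F : FM) g e c : evalF F g (nseq e c) = powF F (g c) e.
Proof. by elim: e => [|e IH] //=; rewrite IH. Qed.

Lemma powF_ge2 (F : FM) z e : goodb F -> z <= fn F ->
  mulF F z (mulF F z z) = mulF F z z -> 1 < e -> powF F z e = mulF F z z.
Proof.
move=> HF Hz Hzz; case: e => [|[|e]] // _; elim: e => [|e IH].
  by rewrite /powF /= mulF_1r.
by rewrite /powF iterS -/(powF F z e.+2) IH.
Qed.

Lemma powF_1 (F : FM) z : goodb F -> z <= fn F -> powF F z 1 = z.
Proof. by move=> HF Hz; rewrite /powF /= mulF_1r. Qed.

Lemma K1c_check (taub : word -> word -> bool) (F : FM) (g : nat -> nat) (rep : nat -> word) L :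
  goodb F -> (forall c, L <= c -> g c = fn F) ->
  all (fun c => all (fun z => (mulF F (g c) z < fn F) ==>
      taub (c :: rep z) (rep (mulF F (g c) z))) (iota 0 (fn F))) (iota 0 L) ->
  forall c z, z < fn F -> mulF F (g c) z < fn F -> taub (c :: rep z) (rep (mulF F (g c) z)).
Proof.
move=> HF Hg /allP H c z Hz; case: (ltnP c L) => Hc.
  have Hc' : c \in iota 0 L by rewrite mem_iota.
  have Hz' : z \in iota 0 (fn F) by rewrite mem_iota.
  by move/allP: (H c Hc') => /(_ z Hz') /implyP.
by rewrite Hg // mulF_0l // ltnn.
Qed.

Lemma Rdist_check (taub : word -> word -> bool) (F : FM) (rep : nat -> word) :
  all (fun z1 => all (fun z2 => taub (rep z1) (rep z2) ==> (z1 == z2)) (iota 0 (fn F)))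
      (iota 0 (fn F)) ->
  forall z1 z2, z1 < fn F -> z2 < fn F -> taub (rep z1) (rep z2) -> z1 = z2.
Proof.
move=> /allP H z1 z2 H1 H2 Ht.
have H1' : z1 \in iota 0 (fn F) by rewrite mem_iota.
have H2' : z2 \in iota 0 (fn F) by rewrite mem_iota.
by move/allP: (H _ H1') => /(_ _ H2'); rewrite Ht => /eqP.
Qed.

Lemma Hrep_check (F : FM) (g : nat -> nat) (rep : nat -> word) :
  all (fun z => evalF F g (rep z) == z) (iota 0 (fn F).+1) ->
  forall z, z <= fn F -> evalF F g (rep z) = z.
Proof. by move=> /allP H z Hz; apply/eqP; apply: H; rewrite mem_iota. Qed.

Lemma Rnz_check (tau : word -> word -> Prop) (W : word -> Prop) (F : FM) (rep : nat -> word)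
  (ws : seq word) : (forall u, tau u u) -> (forall w, w \in ws -> W w) ->
  all (fun z => has (fun w => infix (rep z) w) ws) (iota 0 (fn F)) ->
  forall z, z < fn F -> nonzero tau W (rep z).
Proof.
move=> Hr HW /allP H z Hz.
have Hz' : z \in iota 0 (fn F) by rewrite mem_iota.
case/hasP: (H _ Hz') => w Hw /infixP [p [s E]].
by exists w, p, s; split; [apply: HW | rewrite -E].
Qed.

Lemma powF_or (F : FM) z e : goodb F -> z <= fn F ->
  mulF F z (mulF F z z) = mulF F z z -> 0 < e ->
  powF F z e = z \/ powF F z e = mulF F z z.
Proof.
move=> HF Hz Hzz; case: e => [|[|e]] // _; first by left; apply: powF_1.
by right; apply: powF_ge2.
Qed.

Lemma tau1P u v : reflect (tau1 u v) (red u == red v).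
Proof. by apply: (iffP eqP); [apply: red_tau1 | apply: tau1_red]. Qed.

Lemma red_nseq (c : nat) e : 0 < e -> red (nseq e c) = [:: c].
Proof. by move=> He; rewrite -[nseq e c]cats0 red_nseq_cat. Qed.

Lemma y2 (y : word) (a b : nat) : red y = [:: a; b] ->
  exists e1 e2, 0 < e1 /\ 0 < e2 /\ y = nseq e1 a ++ nseq e2 b.
Proof.
case/red_inv=> e1 [y1 [H1 [-> /red_inv [e2 [y2 [H2 [-> /red_nil ->]]]]]]].
by exists e1, e2; rewrite cats0.
Qed.

Lemma y3 (y : word) (a b c : nat) : red y = [:: a; b; c] ->
  exists e1 e2 e3, [/\ 0 < e1, 0 < e2, 0 < e3 & y = nseq e1 a ++ nseq e2 b ++ nseq e3 c].
Proof.
case/red_inv=> e1 [y1 [H1 [-> /red_inv [e2 [y2 [H2 [-> /red_inv [e3 [y3 [H3 [->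
  /red_nil ->]]]]]]]]]]].
by exists e1, e2, e3; rewrite cats0.
Qed.

Lemma y4 (y : word) (a b c d : nat) : red y = [:: a; b; c; d] ->
  exists e1 e2 e3 e4, [/\ 0 < e1, 0 < e2, 0 < e3, 0 < e4 &
     y = nseq e1 a ++ nseq e2 b ++ nseq e3 c ++ nseq e4 d].
Proof.
case/red_inv=> e1 [y1 [H1 [-> /red_inv [e2 [y2 [H2 [-> /red_inv [e3 [y3 [H3 [->
  /red_inv [e4 [y4 [H4 [-> /red_nil ->]]]]]]]]]]]]]]].
by exists e1, e2, e3, e4; rewrite cats0.
Qed.

Definition gA (c : nat) : nat := if c == la then 1 else if c == lb then 2 else 4.
Definition repA (z : nat) : word :=
  match z with 0 => [::] | 1 => [:: la] | 2 => [:: lb] | 3 => [:: la; lb] | _ => [:: lt] end.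

Lemma A_K1c : forall c z, z < fn FA -> mulF FA (gA c) z < fn FA ->
  (fun u v => red u == red v) (c :: repA z) (repA (mulF FA (gA c) z)).
Proof.
apply: (@K1c_check _ _ _ _ 2 goodFA); last by vm_compute.
by case=> [|[|c]].
Qed.

Lemma A_Rdist : forall z1 z2, z1 < fn FA -> z2 < fn FA ->
  (fun u v => red u == red v) (repA z1) (repA z2) -> z1 = z2.
Proof. by apply: Rdist_check; vm_compute. Qed.

Lemma A_Rnz : forall z, z < fn FA -> nonzero tau1 W_apbp_tau1 (repA z).
Proof.
apply: (@Rnz_check _ _ _ _ [:: [:: la; lb]]); first exact: tau1_refl.
  by move=> w; rewrite inE => /eqP ->; exists 1, 1.
by vm_compute.
Qed.

Lemma A_Hrep : forall z, z <= fn FA -> evalF FA gA (repA z) = z.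
Proof. by apply: Hrep_check; vm_compute. Qed.

Lemma A_G5 : forall y u, W_apbp_tau1 u -> tau1 y u -> evalF FA gA y < fn FA.
Proof.
move=> y u [k [m [Hk [Hm ->]]]] /tau1_red.
rewrite red_nseq_cat // red_cons red_nseq //= => /y2 [e1 [e2 [H1 [H2 ->]]]].
rewrite (evalF_cat goodFA) !evalF_nseq /gA /=.
have HF := goodFA.
have Z1 : mulF FA 1 (mulF FA 1 1) = mulF FA 1 1 by vm_compute.
have Z2 : mulF FA 2 (mulF FA 2 2) = mulF FA 2 2 by vm_compute.
by case: (@powF_or FA 1 e1 HF isT Z1 H1) => ->;
   case: (@powF_or FA 2 e2 HF isT Z2 H2) => ->; vm_compute.
Qed.

Lemma corrA (id : identity) : sat (Mtau tau1 W_apbp_tau1) id <-> sat (MF FA) id.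
Proof.
exact: (@corr tau1 (fun u v => red u == red v) (@tau1P) (@tau1_refl) (@tau1_sym) (@tau1_trans)
  (@tau1_cat) W_apbp_tau1 FA goodFA gA repA (erefl _) A_K1c A_Rdist A_Rnz A_Hrep A_G5 id).
Qed.

Definition lamb' := lamb.

Lemma lam_count (y u : word) (a : nat) : lam y u -> (1 < count_mem a y) = (1 < count_mem a u).
Proof. by case=> _ /(_ a) [E _]; apply/idP/idP => H; apply/E. Qed.

Lemma lam_f2 (y u : word) (a : nat) : lam y u -> 1 < count_mem a u ->
  first2_adj a y = first2_adj a u.
Proof.
case=> _ /(_ a) [E1 E2] H; have H' : 1 < count_mem a y by apply/E1.
by case: (E2 H') => X Y; apply/idP/idP.
Qed.

Lemma f2_nseq2 (a : nat) e s : 1 < e -> first2_adj a (nseq e a ++ s) = true.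
Proof. by case: e => [|[|e]] // _; rewrite /= f2_cons_eq /= eqxx. Qed.

Definition g10 (c : nat) : nat := nth 9 [:: 1; 3] c.
Definition rep10 (z : nat) : word := nth [:: lt; lt] reps10 z.

Lemma B_K1c : forall c z, z < fn F10 -> mulF F10 (g10 c) z < fn F10 ->
  lamb (c :: rep10 z) (rep10 (mulF F10 (g10 c) z)).
Proof.
apply: (@K1c_check _ _ _ _ 2 goodF10); last by vm_compute.
by case=> [|[|c]] // _; rewrite /g10 nth_default.
Qed.

Lemma B_Rdist : forall z1 z2, z1 < fn F10 -> z2 < fn F10 ->
  lamb (rep10 z1) (rep10 z2) -> z1 = z2.
Proof. by apply: Rdist_check; vm_compute. Qed.

Lemma B_Rnz : forall z, z < fn F10 -> nonzero lam W_apbp_lam (rep10 z).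
Proof.
apply: (@Rnz_check _ _ _ _ [:: [:: la; la; lb; lb]]); first exact: lam_refl.
  by move=> w; rewrite inE => /eqP ->; exists 2, 2.
by vm_compute.
Qed.

Lemma B_Hrep : forall z, z <= fn F10 -> evalF F10 g10 (rep10 z) = z.
Proof. by apply: Hrep_check; vm_compute. Qed.

Lemma B_G5 : forall y u, W_apbp_lam u -> lam y u -> evalF F10 g10 y < fn F10.
Proof.
move=> y u [k [m [Hk [Hm ->]]]] Hl.
have Ca := lam_count la Hl; have Cb := lam_count lb Hl.
case: Hl => /tau1_red.
rewrite red_nseq_cat ?(leq_trans _ Hk) // red_cons red_nseq ?(leq_trans _ Hm) //=.
move=> /y2 [e1 [e2 [H1 [H2 E]]]] _; subst y.
move: Ca Cb; rewrite !count_cat !count_nseq /= ?mul1n ?mul0n ?addn0 ?add0n => Ca Cb.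
have He1 : 1 < e1 by rewrite Ca.
have He2 : 1 < e2 by rewrite Cb.
have HF := goodF10.
rewrite (evalF_cat HF) !evalF_nseq /g10 /=.
have Z1 : mulF F10 1 (mulF F10 1 1) = mulF F10 1 1 by vm_compute.
have Z2 : mulF F10 3 (mulF F10 3 3) = mulF F10 3 3 by vm_compute.
rewrite (@powF_ge2 F10 1 e1 HF isT Z1 He1) (@powF_ge2 F10 3 e2 HF isT Z2 He2).
by vm_compute.
Qed.

Lemma corrB (id : identity) : sat (Mtau lam W_apbp_lam) id <-> sat (MF F10) id.
Proof.
exact: (@corr lam lamb lamP lam_refl (@lam_sym) (@lam_trans)
  (@lam_cat) W_apbp_lam F10 goodF10 g10 rep10 (erefl _) B_K1c B_Rdist B_Rnz B_Hrep B_G5 id).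
Qed.

Definition gata (c : nat) : nat := nth 8 [:: 1; 8; 3] c.
Definition repata (z : nat) : word := nth [:: lt; lt] repsata z.

Lemma C_K1c : forall c z, z < fn Fata -> mulF Fata (gata c) z < fn Fata ->
  lamb (c :: repata z) (repata (mulF Fata (gata c) z)).
Proof.
apply: (@K1c_check _ _ _ _ 3 goodFata); last by vm_compute.
by case=> [|[|[|c]]] // _; rewrite /gata nth_default.
Qed.

Lemma C_Rdist : forall z1 z2, z1 < fn Fata -> z2 < fn Fata ->
  lamb (repata z1) (repata z2) -> z1 = z2.
Proof. by apply: Rdist_check; vm_compute. Qed.

Lemma C_Rnz : forall z, z < fn Fata -> nonzero lam W_ata (repata z).
Proof.
apply: (@Rnz_check _ _ _ _ [:: [:: la; lt; la; la]; [:: la; lt; la]]); first exact: lam_refl.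
  move=> w; rewrite !inE => /orP [] /eqP ->; [by exists 2 | by exists 1].
by vm_compute.
Qed.

Lemma C_Hrep : forall z, z <= fn Fata -> evalF Fata gata (repata z) = z.
Proof. by apply: Hrep_check; vm_compute. Qed.

Lemma C_G5 : forall y u, W_ata u -> lam y u -> evalF Fata gata y < fn Fata.
Proof.
move=> y u [k [Hk ->]] Hl.
have Ct := lam_count lt Hl.
have Fa := lam_f2 Hl.
case: Hl => /tau1_red.
rewrite /= red_nseq //=.
move=> /y3 [e1 [e2 [e3 [H1 H2 H3 E]]]] _; subst y.
move: Ct; rewrite !count_cat !count_nseq /= ?mul1n ?mul0n ?addn0 ?add0n => Ct.
have He2 : e2 = 1 by apply/eqP; rewrite eqn_leq H2 andbT leqNgt Ct.
subst e2.
have He1 : e1 = 1.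
  apply/eqP; rewrite eqn_leq H1 andbT leqNgt; apply/negP => He1.
  move: (Fa la); rewrite f2_nseq2 //= => H.
  have : 1 < 1 + (0 + count_mem la (nseq k la)) by rewrite count_nseq /= mul1n add0n; lia.
  by move/H; rewrite f2_cons_eq.
subst e1.
have HF := goodFata.
rewrite !(evalF_cat HF) !evalF_nseq /gata /=.
have Z1 : mulF Fata 1 (mulF Fata 1 1) = mulF Fata 1 1 by vm_compute.
by case: (@powF_or Fata 1 e3 HF isT Z1 H3) => ->; vm_compute.
Qed.

Lemma corrC (id : identity) : sat (Mtau lam W_ata) id <-> sat (MF Fata) id.
Proof.
exact: (@corr lam lamb lamP lam_refl (@lam_sym) (@lam_trans)
  (@lam_cat) W_ata Fata goodFata gata repata (erefl _) C_K1c C_Rdist C_Rnz C_Hrep C_G5 id).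
Qed.

Definition gatab (c : nat) : nat := nth 20 [:: 1; 8; 3] c.
Definition repatab (z : nat) : word := nth [:: lt; lt] repsatab z.

Lemma D_K1c : forall c z, z < fn Fatab -> mulF Fatab (gatab c) z < fn Fatab ->
  lamb (c :: repatab z) (repatab (mulF Fatab (gatab c) z)).
Proof.
apply: (@K1c_check _ _ _ _ 3 goodFatab); last by vm_compute.
by case=> [|[|[|c]]] // _; rewrite /gatab nth_default.
Qed.

Lemma D_Rdist : forall z1 z2, z1 < fn Fatab -> z2 < fn Fatab ->
  lamb (repatab z1) (repatab z2) -> z1 = z2.
Proof. by apply: Rdist_check; vm_compute. Qed.

Lemma D_Rnz : forall z, z < fn Fatab -> nonzero lam W_atab (repatab z).
Proof.
apply: (@Rnz_check _ _ _ _ [:: [:: la; lt; la; la; lb; lb]; [:: la; lt; la; lb; lb]]);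
  first exact: lam_refl.
  move=> w; rewrite !inE => /orP [] /eqP ->; [by exists 2, 2 | by exists 1, 2].
by vm_compute.
Qed.

Lemma D_Hrep : forall z, z <= fn Fatab -> evalF Fatab gatab (repatab z) = z.
Proof. by apply: Hrep_check; vm_compute. Qed.

Lemma D_G5 : forall y u, W_atab u -> lam y u -> evalF Fatab gatab y < fn Fatab.
Proof.
move=> y u [k [m [Hk [Hm ->]]]] Hl.
have Ct := lam_count lt Hl.
have Cb := lam_count lb Hl.
have Fa := lam_f2 Hl.
case: Hl => /tau1_red.
rewrite /= red_nseq_cat // red_cons red_nseq ?(leq_trans _ Hm) //=.
move=> /y4 [e1 [e2 [e3 [e4 [H1 H2 H3 H4 E]]]]] _; subst y.
move: Ct Cb; rewrite !count_cat !count_nseq /= ?mul1n ?mul0n ?addn0 ?add0n => Ct Cb.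
have He2 : e2 = 1 by apply/eqP; rewrite eqn_leq H2 andbT leqNgt Ct.
subst e2.
have He4 : 1 < e4 by rewrite Cb.
have He1 : e1 = 1.
  apply/eqP; rewrite eqn_leq H1 andbT leqNgt; apply/negP => He1.
  move: (Fa la); rewrite f2_nseq2 //= => H.
  have : 1 < 1 + (0 + count_mem la (nseq k la ++ nseq m lb)).
    by rewrite count_cat !count_nseq /= mul1n mul0n addn0 add0n; lia.
  by move/H; rewrite f2_cons_eq.
subst e1.
have HF := goodFatab.
rewrite !(evalF_cat HF) !evalF_nseq /gatab /=.
have Z1 : mulF Fatab 1 (mulF Fatab 1 1) = mulF Fatab 1 1 by vm_compute.
have Z2 : mulF Fatab 8 (mulF Fatab 8 8) = mulF Fatab 8 8 by vm_compute.
rewrite (@powF_ge2 Fatab 8 e4 HF isT Z2 He4).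
by case: (@powF_or Fatab 1 e3 HF isT Z1 H3) => ->; vm_compute.
Qed.

Lemma corrD (id : identity) : sat (Mtau lam W_atab) id <-> sat (MF Fatab) id.
Proof.
exact: (@corr lam lamb lamP lam_refl (@lam_sym) (@lam_trans)
  (@lam_cat) W_atab Fatab goodFatab gatab repatab (erefl _) D_K1c D_Rdist D_Rnz D_Hrep D_G5 id).
Qed.

Lemma evalF_single (F : FM) (c z : nat) (w : word) : goodb F -> z <= fn F ->
  evalF F (fun i => if i == c then z else 0) w = powF F z (count_mem c w).
Proof.
move=> HF Hz; elim: w => [|a w IH] //=; rewrite IH.
case: (eqVneq a c) => [_|Hne] /=; first by [].
rewrite add0n mulF_1l //.
by case: (count_mem c w) => [|n] //; rewrite /powF /= mulF_le.
Qed.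

Lemma evalF_inv (F : FM) (S P : seq nat) (z c : nat) (phi : nat -> nat) (w : word) :
  goodb F -> (forall i, phi i \in S) -> phi c = z -> c \in w ->
  all (fun y => all (fun X => mulF F y X \in P) P) S ->
  all (fun X => mulF F z X \in P) (rng F) -> evalF F phi w \in P.
Proof.
move=> HF HS Hc Hw /allP H1 /allP H2; elim: w Hw => [|a w IH] //=.
case: (eqVneq a c) => [->|Hne] Hw.
  by rewrite Hc; apply: H2; rewrite mem_rng evalF_le.
have Hw' : c \in w by move: Hw; rewrite inE eq_sym (negbTE Hne).
by move/allP: (H1 _ (HS a)) => /(_ _ (IH Hw')).
Qed.

Lemma evb_neg (w : word) (c k d j : nat) : c != d -> k < count_mem c w -> j < count_mem d w ->
  (evb w c k d j <-> ~ evb w d j c k).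
Proof.
move=> Hcd Hk Hj; split; first by move=> H1 H2; apply: evb_anti H1 H2.
by case: (evb_total Hcd Hk Hj).
Qed.

Lemma powF3 n : powF FA 3 n = if n == 0 then 0 else if n == 1 then 3 else 4.
Proof.
case: n => [|[|n]] //; rewrite (@powF_ge2 FA 3 n.+2 goodFA isT) //.
Qed.

Lemma FA_counts (u v : word) : sat (MF FA) (u, v) ->
  forall c, minn (count_mem c u) 2 = minn (count_mem c v) 2.
Proof.
move/(satMF goodFA) => H c; move: (H (fun i => if i == c then 3 else 0)).
rewrite !evalF_single ?goodFA // !powF3.
case: (count_mem c u) => [|[|n]]; case: (count_mem c v) => [|[|m]] //.
Qed.

Definition phiPL (c d : nat) (i : nat) : nat := if i == c then 1 else if i == d then 2 else 0.

Lemma phiPL_in c d i : phiPL c d i \in [:: 0; 1; 2].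
Proof. by rewrite /phiPL; case: (i == c); case: (i == d). Qed.

Lemma PL (w : word) (c d : nat) : c != d -> c \in w -> d \in w ->
  (evalF FA (phiPL c d) w = 3 <-> evb w c (count_mem c w - 1) d 0).
Proof.
move=> Hcd Hc Hd; have HF := goodFA.
have Hdc : (d == c) = false by rewrite eq_sym (negbTE Hcd).
split; last first.
  case=> p [s [E [H1 H2]]]; subst w.
  move: H1 H2; rewrite !count_cat => H1 H2.
  have Hs : c \notin s by apply/count_memPn; move: H1; clia.
  have Hp : d \notin p by apply/count_memPn; move: H2; clia.
  have Hcp : 0 < count_mem c p by move: H1; clia.
  have Hds : d \in s by move: Hd; rewrite mem_cat (negbTE Hp).
  rewrite (evalF_cat HF).
  rewrite (@evalF_ext _ _ (fun i => if i == c then 1 else 0) p); last first.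
    move=> i Hi; rewrite /phiPL; case: eqP => // _.
    by case: eqP => // Ei; rewrite -Ei Hi in Hp.
  rewrite (@evalF_ext _ _ (fun i => if i == d then 2 else 0) s); last first.
    move=> i Hi; rewrite /phiPL; case: eqP => [Ei|_]; first by rewrite -Ei Hi in Hs.
    by [].
  rewrite !evalF_single //.
  have Z1 : mulF FA 1 (mulF FA 1 1) = mulF FA 1 1 by vm_compute.
  have Z2 : mulF FA 2 (mulF FA 2 2) = mulF FA 2 2 by vm_compute.
  have Hds' : 0 < count_mem d s by rewrite cnt_gt0.
  by case: (@powF_or FA 1 _ HF isT Z1 Hcp) => ->;
     case: (@powF_or FA 2 _ HF isT Z2 Hds') => ->.
move=> Hv; apply/(evb_neg Hcd); try by rewrite ?cnt_gt0; clia.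
  by move: Hc; rewrite -cnt_gt0; clia.
case=> p [s [E [H1 H2]]]; subst w.
move: H1 H2; rewrite !count_cat => H1 H2.
have Hcs : c \in s.
  by rewrite -cnt_gt0; move: H1 H2 Hc; rewrite -cnt_gt0 count_cat; clia.
have Hdp : d \in p by rewrite -cnt_gt0.
have X1 : evalF FA (phiPL c d) p \in [:: 2; 3; 4].
  apply: (@evalF_inv _ [:: 0; 1; 2] _ 2 d) => //; first exact: phiPL_in.
  by rewrite /phiPL Hdc eqxx.
have X2 : evalF FA (phiPL c d) s \in [:: 1; 3; 4].
  apply: (@evalF_inv _ [:: 0; 1; 2] _ 1 c) => //; first exact: phiPL_in.
  by rewrite /phiPL eqxx.
move: Hv; rewrite (evalF_cat HF).
have Z : all (fun X => all (fun Y => mulF FA X Y == 4) [:: 1; 3; 4]) [:: 2; 3; 4] by vm_compute.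
by move/allP: Z => /(_ _ X1) /allP /(_ _ X2) /eqP ->.
Qed.

Definition phiATA (z x : nat) (i : nat) : nat := if i == z then 3 else if i == x then 1 else 0.

Lemma ATA (w : word) (z x : nat) : z != x -> count_mem z w = 1 -> count_mem x w = 3 ->
  (evalF Fata (phiATA z x) w = 8 <-> evb w x 1 z 0).
Proof.
move=> Hzx Hz Hx; have HF := goodFata.
have : z \in w by rewrite -cnt_gt0 Hz.
case/first_split=> p [s [E Hp]]; subst w.
move: Hz Hx; rewrite !count_cat /= eqxx (count_memPn Hp) add0n add1n => -[/count_memPn Hs].
rewrite (negbTE Hzx) add0n => Hx.
have -> : evb (p ++ z :: s) x 1 z 0 <-> 1 < count_mem x p.
  split.
    case=> p' [s' [E [H1 H2]]].
    case: (cat_eq_cases E) => [[m Em]|[m Em]]; last first.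
      by subst p; rewrite count_cat; move: H1; clia.
    subst p'; rewrite -catA in E; move/esym/cat_cancel_l: E.
    case: m H1 H2 => [|a m] H1 H2; first by rewrite cats0 in H1.
    case=> Ea _; subst a; move: H2; rewrite count_cat /= eqxx; clia.
  move=> H; exists p, (z :: s); split => //; split => //.
  by rewrite (count_memPn Hp).
rewrite (evalF_cat HF) /= {2}/phiATA eqxx.
rewrite (@evalF_ext _ _ (fun i => if i == x then 1 else 0) p); last first.
  move=> i Hi; rewrite /phiATA; case: eqP => // Ei; by rewrite -Ei Hi in Hp.
rewrite (@evalF_ext _ _ (fun i => if i == x then 1 else 0) s); last first.
  move=> i Hi; rewrite /phiATA; case: eqP => // Ei; by rewrite -Ei Hi in Hs.
rewrite !evalF_single //.
have Hs' : count_mem x s = 3 - count_mem x p by clia.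
have Hb : count_mem x p <= 3 by clia.
rewrite Hs'; move: (count_mem x p) Hb => b.
have Z : all (fun b => (mulF Fata (powF Fata 1 b) (mulF Fata 3 (powF Fata 1 (3 - b))) == 8)
                      == (1 < b)) (iota 0 4) by vm_compute.
move=> Hb; have Hb' : b \in iota 0 4 by rewrite mem_iota.
move/allP: Z => /(_ _ Hb') /eqP E.
by split => [/eqP|H]; [rewrite E | apply/eqP; rewrite E].
Qed.

Lemma indep_false (W : word) (c k d j : nat) : c != d -> ~~ indep W c k d j ->
  ~ (0 < k /\ 0 < j) /\ ~ (k.+1 < count_mem c W /\ j.+1 < count_mem d W).
Proof.
move=> Hcd; rewrite /indep Hcd /= negb_or => /andP [H1 H2].
split => -[A B]; [move: H1 | move: H2]; by rewrite A B.
Qed.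

Lemma sat_of_check (F : FM) (S : seq identity) : goodb F -> all (checkF F) S ->
  forall id, id \in S -> sat (MF F) id.
Proof. by move=> HF /allP H id Hid; apply: checkF_sat => //; apply: H. Qed.

Lemma sat_nf (F : FM) (S : seq identity) (u v nu nv : word) : goodb F -> all (checkF F) S ->
  deriv S u nu -> deriv S v nv -> sat (MF F) (u, v) -> sat (MF F) (nu, nv).
Proof.
move=> HF HS Du Dv H.
have HM := MF_monoid HF.
have H1 := sat_deriv HM (sat_of_check HF HS) Du.
have H2 := sat_deriv HM (sat_of_check HF HS) Dv.
exact: (sat_trans HM (sat_sym HM H1) (sat_trans HM H H2)).
Qed.

Lemma PL_eq (u v : word) (c d : nat) : sat (MF FA) (u, v) -> c != d ->
  (forall e, count_mem e u = count_mem e v) -> c \in u -> d \in u ->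
  (evb u c (count_mem c u - 1) d 0 <-> evb v c (count_mem c v - 1) d 0).
Proof.
move=> /(satMF goodFA) H Hcd Hc Hcu Hdu.
have Hcv : c \in v by rewrite -cnt_gt0 -Hc cnt_gt0.
have Hdv : d \in v by rewrite -cnt_gt0 -Hc cnt_gt0.
rewrite -(PL Hcd Hcu Hdu) -(PL Hcd Hcv Hdv) H; by [].
Qed.

Lemma C1 (u v : word) : sat (MF FA) (u, v) -> deriv Sigma1 u v.
Proof.
move=> H.
case: (NF1 (leqnn (size u))) => nu [Du Cu].
case: (NF1 (leqnn (size v))) => nv [Dv Cv].
have Hn := sat_nf goodFA FA_S1 Du Dv H.
have Hc e : count_mem e nu = count_mem e nv by rewrite Cu Cv (FA_counts H).
apply: d_trans Du _; apply: d_trans _ (d_sym Dv).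
apply: (swstar_deriv S1_sw); apply: trace => // c k d j Hcd Hk Hj Hni.
case: (indep_false Hcd Hni) => N1 N2.
have Bc : count_mem c nu <= 2 by rewrite Cu geq_minr.
have Bd : count_mem d nu <= 2 by rewrite Cu geq_minr.
have Hcu : c \in nu by rewrite -cnt_gt0; clia.
have Hdu : d \in nu by rewrite -cnt_gt0; clia.
have Hdc : d != c by rewrite eq_sym.
have : (k = count_mem c nu - 1 /\ j = 0) \/ (k = 0 /\ j = count_mem d nu - 1) by clia.
case=> [[-> ->]|[-> ->]].
  by rewrite (PL_eq Hn Hcd Hc Hcu Hdu) Hc.
have Hkc : 0 < count_mem c nu by rewrite cnt_gt0.
have Hjd : count_mem d nu - 1 < count_mem d nu by clia.
rewrite (evb_neg Hcd Hkc Hjd).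
have Hkc' : 0 < count_mem c nv by rewrite -Hc.
have Hjd' : count_mem d nv - 1 < count_mem d nv by rewrite -Hc.
have P := PL_eq Hn Hdc Hc Hdu Hcu.
have N' := evb_neg Hcd Hkc' Hjd'.
move: P N'; rewrite -!Hc; tauto.
Qed.

Lemma ATA_eq (u v : word) (z x : nat) : sat (MF Fata) (u, v) -> z != x ->
  (forall e, count_mem e u = count_mem e v) -> count_mem z u = 1 -> count_mem x u = 3 ->
  (evb u x 1 z 0 <-> evb v x 1 z 0).
Proof.
move=> /(satMF goodFata) H Hzx Hc Hz Hx.
rewrite -(ATA Hzx Hz Hx) -(ATA Hzx _ _); try by rewrite -Hc.
by rewrite H.
Qed.

Lemma C2 (u v : word) : sat (MF FA) (u, v) -> sat (MF Fata) (u, v) -> deriv Sigma2 u v.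
Proof.
move=> H H'.
case: (NF2 u) => nu [Du Cu].
case: (NF2 v) => nv [Dv Cv].
have Hn := sat_nf goodFA FA_S2 Du Dv H.
have Hn' := sat_nf goodFata Fata_S2 Du Dv H'.
have Hc e : count_mem e nu = count_mem e nv.
  have := FA_counts H e; rewrite Cu Cv.
  by case: (count_mem e u) => [|[|n]]; case: (count_mem e v) => [|[|m]].
have B e : count_mem e nu = 0 \/ count_mem e nu = 1 \/ count_mem e nu = 3.
  by rewrite Cu; case: (count_mem e u) => [|[|n]]; auto.
apply: d_trans Du _; apply: d_trans _ (d_sym Dv).
apply: (swstar_deriv S2_sw); apply: trace => // c k d j Hcd Hk Hj Hni.
case: (indep_false Hcd Hni) => N1 N2.
have Bc := B c; have Bd := B d.
have Hcu : c \in nu by rewrite -cnt_gt0; clia.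
have Hdu : d \in nu by rewrite -cnt_gt0; clia.
have Hdc : d != c by rewrite eq_sym.
have : (k = count_mem c nu - 1 /\ j = 0) \/ (k = 0 /\ j = count_mem d nu - 1) \/
        (count_mem c nu = 1 /\ k = 0 /\ j = 1 /\ count_mem d nu = 3) \/
        (count_mem d nu = 1 /\ j = 0 /\ k = 1 /\ count_mem c nu = 3).
  by move: Hk Hj N1 N2 Bc Bd; clear; clia.
case=> [[-> ->]|[[-> ->]|[[E1 [-> [-> E2]]]|[E1 [-> [-> E2]]]]]].
- by rewrite (PL_eq Hn Hcd Hc Hcu Hdu) Hc.
- have Hkc : 0 < count_mem c nu by rewrite cnt_gt0.
  have Hjd : count_mem d nu - 1 < count_mem d nu by clia.
  rewrite (evb_neg Hcd Hkc Hjd).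
  have Hkc' : 0 < count_mem c nv by rewrite -Hc.
  have Hjd' : count_mem d nv - 1 < count_mem d nv by rewrite -Hc.
  have P := PL_eq Hn Hdc Hc Hdu Hcu.
  have N' := evb_neg Hcd Hkc' Hjd'.
  move: P N'; rewrite -!Hc; tauto.
- have Hkc : 0 < count_mem c nu by rewrite cnt_gt0.
  have Hjd : 1 < count_mem d nu by rewrite E2.
  rewrite (evb_neg Hcd Hkc Hjd).
  have Hkc' : 0 < count_mem c nv by rewrite -Hc.
  have Hjd' : 1 < count_mem d nv by rewrite -Hc.
  rewrite (evb_neg Hcd Hkc' Hjd').
  by rewrite (ATA_eq Hn' Hcd Hc E1 E2).
- exact: (ATA_eq Hn' Hdc Hc E1 E2).
Qed.


Lemma A01_FA_mul x y : A01_to_nat (A01_mul x y) = mulF FA (A01_to_nat x) (A01_to_nat y).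
Proof. by case: x; case: y; vm_compute. Qed.

Lemma A01_FA_back i : A01_to_nat (nat_to_A01 i) = clamp FA i.
Proof. by case: i => [|[|[|[|[|i]]]]]. Qed.

Lemma A01_eval (psi : nat -> A01) (w : word) :
  A01_to_nat (@eval A01M psi w) = evalF FA (fun i => A01_to_nat (psi i)) w.
Proof. by elim: w => [|a w IH] //=; rewrite A01_FA_mul IH. Qed.

Lemma A01_inj : injective A01_to_nat.
Proof. by case; case. Qed.

Lemma satA01 (id : identity) : sat A01M id <-> sat (MF FA) id.
Proof.
case: id => u v; split => H.
  apply/(satMF goodFA) => phi.
  rewrite (evalF_clamp FA phi u) (evalF_clamp FA phi v).
  have E w : evalF FA (fun i => clamp FA (phi i)) w =
             A01_to_nat (@eval A01M (fun i => nat_to_A01 (phi i)) w).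
    rewrite A01_eval; apply: evalF_ext => c _; by rewrite A01_FA_back.
  by rewrite !E (H (fun i => nat_to_A01 (phi i))).
move=> psi; apply: A01_inj; rewrite /= !A01_eval.
by move/(satMF goodFA): H; apply.
Qed.

Definition hA10 (i : nat) : nat := nth 9 [:: 0; 2; 4; 8; 9] i.
Definition hAatab (i : nat) : nat := nth 20 [:: 0; 2; 9; 13; 20] i.
Definition hata (i : nat) : nat := nth 20 [:: 0; 1; 2; 3; 4; 5; 6; 7; 20] i.

Lemma hom1 : homb FA F10 hA10. Proof. by vm_compute. Qed.
Lemma hom2 : homb FA Fatab hAatab. Proof. by vm_compute. Qed.
Lemma hom3 : homb Fata Fatab hata. Proof. by vm_compute. Qed.

Theorem lemma6p3 :
  (* (i) *)
  (same_var A01M (Mtau tau1 W_apbp_tau1) /\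
   same_var A01M (Mtau lam W_apbp_lam) /\
   var_defined_by A01M Sigma1) /\
  (* (ii) *)
  (var_is_join (Mtau lam W_atab) A01M (Mtau lam W_ata) /\
   var_defined_by (Mtau lam W_atab) Sigma2).
Proof.
split; [split; [|split]|split].
- move=> id; split => H; [apply/corrA; apply/satA01 | apply/satA01; apply/corrA]; exact: H.
- move=> [u v]; split => H.
    apply/corrB; move/satA01: H => /C1 D.
    exact (sat_deriv (MF_monoid goodF10) (fun id => @sat_of_check _ _ goodF10 F10_S1 id) D).
  apply/satA01; apply: (hom_sat goodFA goodF10 hom1); exact/corrB.
- move=> N HN; split.
    move=> Hin id Hid; apply: Hin; apply/satA01; exact: (@sat_of_check _ _ goodFA FA_S1 _ Hid).
  move=> HS [u v] /satA01 H; exact (sat_deriv HN HS (C1 H)).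
- move=> [u v]; split.
    move=> /corrD H; split.
      apply/satA01; exact: hom_sat goodFA goodFatab hom2 H.
    apply/corrC; exact: hom_sat goodFata goodFatab hom3 H.
  case=> /satA01 H1 /corrC H2; apply/corrD.
  exact (sat_deriv (MF_monoid goodFatab) (fun id => @sat_of_check _ _ goodFatab Fatab_S2 id) (C2 H1 H2)).
- move=> N HN; split.
    move=> Hin id Hid; apply: Hin; apply/corrD; exact: (@sat_of_check _ _ goodFatab Fatab_S2 _ Hid).
  move=> HS [u v] /corrD H.
  exact (sat_deriv HN HS (C2 (hom_sat goodFA goodFatab hom2 H) (hom_sat goodFata goodFatab hom3 H))).
Qed.
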